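(* Let $\Gamma$ be a graph of connectivity $1$. Then $\Gamma$ is arc-transitive if and only if: (1) every lobe of $\Gamma$ is arc-transitive; (2) the lobes of $\Gamma$ are pairwise isomorphic; and (3) all vertices of $\Gamma$ lie in the same number of lobes.
   Context: All graphs are simple, connected, and finite or countably infinite. For edges $e_1,e_2$ write $e_1\cong e_2$ if $e_1=e_2$ or they lie on a common cycle; a lobe is the subgraph induced by an equivalence class (a cut-edge with its ends, or a maximal biconnected subgraph). A connected graph other than $K_2$ has connectivity $1$ iff some vertex lies in at least two lobes. An arc is an ordered pair of adjacent vertices; arc-transitive means the automorphism group acts transitively on arcs. *)

(* Defs.v *)
From Stdlib Require Import List Arith Relations.
Import ListNotations.
Set Implicit Arguments.

Section Graphs.
Variable V : Type.
Variable adj : V -> V -> Prop.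

Definition simple_graph : Prop :=
  (forall x y, adj x y -> adj y x) /\ (forall x, ~ adj x x).

Definition countable_vertices : Prop :=
  exists f : V -> nat, forall x y, f x = f y -> x = y.

Definition connected : Prop :=
  (exists v : V, True) /\ forall u v, clos_refl_trans V adj u v.

Definition adj_minus (v : V) (x y : V) : Prop := x <> v /\ y <> v /\ adj x y.

Definition cut_vertex (v : V) : Prop :=
  exists a b, a <> v /\ b <> v /\ ~ clos_refl_trans V (adj_minus v) a b.

(* Vertex connectivity exactly 1: connected, at least two vertices, and either
   Gamma = K2 (exactly two vertices) or removing some vertex disconnects Gamma. *)
Definition connectivity_one : Prop :=
  connected /\ (exists a b : V, a <> b) /\
  ((exists a b : V, forall c, c = a \/ c = b) \/ exists v, cut_vertex v).

Definition is_cycle (l : list V) : Prop :=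
  NoDup l /\ 3 <= length l /\
  forall i d, i < length l -> adj (nth i l d) (nth (S i mod length l) l d).

Definition edge_on_cycle (l : list V) (x y : V) : Prop :=
  exists i, i < length l /\
    ((nth i l x = x /\ nth (S i mod length l) l x = y) \/
     (nth i l x = y /\ nth (S i mod length l) l x = x)).

(* Edges are represented by ordered pairs (x,y) with adj x y; (x,y) and (y,x)
   denote the same edge.  e1 ~= e2 iff e1 = e2 or they lie on a common cycle. *)
Definition edge_equiv (e1 e2 : V * V) : Prop :=
  adj (fst e1) (snd e1) /\ adj (fst e2) (snd e2) /\
  ((e1 = e2 \/ (fst e1, snd e1) = (snd e2, fst e2)) \/
   exists l, is_cycle l /\ edge_on_cycle l (fst e1) (snd e1) /\
             edge_on_cycle l (fst e2) (snd e2)).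

Definition lobe : Type :=
  { C : V * V -> Prop | exists x y, adj x y /\ C = edge_equiv (x, y) }.

Definition lobe_vert (C : lobe) : Type :=
  { v : V | exists w, proj1_sig C (v, w) }.

Definition lobe_adj (C : lobe) (a b : lobe_vert C) : Prop :=
  proj1_sig C (proj1_sig a, proj1_sig b).

Definition lobes_at (v : V) : Type :=
  { C : lobe | exists w, proj1_sig C (v, w) }.

End Graphs.

Definition bijective_map {A B : Type} (f : A -> B) : Prop :=
  exists g : B -> A, (forall a, g (f a) = a) /\ (forall b, f (g b) = b).

Definition is_automorphism {W : Type} (r : W -> W -> Prop) (f : W -> W) : Prop :=
  bijective_map f /\ forall x y, r x y <-> r (f x) (f y).

Definition arc_transitive {W : Type} (r : W -> W -> Prop) : Prop :=
  forall x y x' y', r x y -> r x' y' ->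
    exists f, is_automorphism r f /\ f x = x' /\ f y = y'.

Definition graph_isomorphic {W1 W2 : Type} (r1 : W1 -> W1 -> Prop)
  (r2 : W2 -> W2 -> Prop) : Prop :=
  exists f : W1 -> W2, bijective_map f /\ forall x y, r1 x y <-> r2 (f x) (f y).

Definition same_card (A B : Type) : Prop := exists f : A -> B, bijective_map f.

(* Main.v *)
From Stdlib Require Import List Arith Lia Relations Permutation Classical ClassicalEpsilon ProofIrrelevance FunctionalExtensionality PropExtensionality.
Import ListNotations.
Require Import Defs.

Import ListNotations.
Set Implicit Arguments.

Section Lists.
Variable V : Type.

Fixpoint chainr (r : V -> V -> Prop) (l : list V) : Prop :=
  match l with
  | a :: ((b :: _) as t) => r a b /\ chainr r t
  | _ => True
  end.

Lemma chainr_cons2 r a b l : chainr r (a :: b :: l) <-> r a b /\ chainr r (b :: l).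
Proof. simpl; tauto. Qed.

Lemma chainr_tail r a l : chainr r (a :: l) -> chainr r l.
Proof. destruct l; simpl; tauto. Qed.

Lemma chainr_app r l1 b l2 :
  chainr r (l1 ++ b :: l2) <-> chainr r (l1 ++ [b]) /\ chainr r (b :: l2).
Proof.
  induction l1 as [|a l1 IH]; simpl.
  - destruct l2; simpl; tauto.
  - destruct l1 as [|c l1']; simpl in *.
    + destruct l2; simpl; tauto.
    + rewrite IH. tauto.
Qed.

Lemma chainr_app_weak r l1 l2 : chainr r (l1 ++ l2) -> chainr r l1 /\ chainr r l2.
Proof.
  induction l1 as [|a l1 IH]; simpl; intros H. split; auto.
  destruct l1 as [|c l1']; simpl in *.
  - split; auto. destruct l2; simpl in *; tauto.
  - destruct H as [H1 H2]. apply IH in H2. tauto.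
Qed.

Lemma chainr_rev_aux r (Hs : forall x y, r x y -> r y x) a l :
  chainr r (a :: l) -> chainr r (rev l ++ [a]).
Proof.
  revert a; induction l as [|b l IH]; intros a H; simpl; auto.
  apply chainr_cons2 in H as [H1 H2].
  rewrite <- app_assoc; simpl.
  apply chainr_app; split; auto. simpl; auto.
Qed.

Lemma chainr_rev r (Hs : forall x y, r x y -> r y x) l :
  chainr r l -> chainr r (rev l).
Proof. destruct l; simpl; auto. apply chainr_rev_aux; auto. Qed.

Lemma chainr_mono (r s : V -> V -> Prop) l : (forall x y, r x y -> s x y) -> chainr r l -> chainr s l.
Proof. intros Hrs; induction l as [|a l IH]; simpl; auto. destruct l; auto. intros [? ?]; split; auto. Qed.

Lemma chainr_nth r l d : chainr r l -> forall k, S k < length l -> r (nth k l d) (nth (S k) l d).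
Proof.
  induction l as [|a l IH]; simpl; intros H k Hk; [lia|].
  destruct l as [|b l']; simpl in *; [lia|].
  destruct H as [H1 H2]. destruct k; simpl; auto.
  apply (IH H2 k). simpl; lia.
Qed.

Lemma nth_chainr r l d : (forall k, S k < length l -> r (nth k l d) (nth (S k) l d)) -> chainr r l.
Proof.
  induction l as [|a l IH]; simpl; intros H; auto.
  destruct l as [|b l']; auto. split.
  - apply (H 0). simpl; lia.
  - apply IH. intros k Hk. apply (H (S k)). simpl in *; lia.
Qed.

Definition consec (a b : V) (l : list V) : Prop := exists l1 l2, l = l1 ++ a :: b :: l2.

Lemma consec_chainr r a b l : consec a b l -> chainr r l -> r a b.
Proof.
  intros (l1 & l2 & ->) H. rewrite chainr_app in H. destruct H as [_ H]. simpl in H. tauto.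
Qed.

Lemma consec_in a b l : consec a b l -> In a l /\ In b l.
Proof. intros (l1 & l2 & ->). split; apply in_or_app; simpl; auto. Qed.

Lemma consec_rev a b l : consec a b l -> consec b a (rev l).
Proof.
  intros (l1 & l2 & ->). exists (rev l2), (rev l1).
  rewrite rev_app_distr. simpl. repeat rewrite <- app_assoc. simpl. reflexivity.
Qed.

Lemma consec_app_l a b l1 l2 : consec a b l1 -> consec a b (l1 ++ l2).
Proof. intros (m1 & m2 & ->). exists m1, (m2 ++ l2). rewrite <- app_assoc. reflexivity. Qed.

Lemma consec_app_r a b l1 l2 : consec a b l2 -> consec a b (l1 ++ l2).
Proof. intros (m1 & m2 & ->). exists (l1 ++ m1), m2. rewrite <- app_assoc. reflexivity. Qed.

Lemma consec_cons a b l : consec a b (a :: b :: l).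
Proof. exists [], l. reflexivity. Qed.

Lemma consec_mid a b l1 l2 : consec a b ((l1 ++ [a]) ++ b :: l2).
Proof. exists l1, l2. rewrite <- app_assoc. reflexivity. Qed.

Lemma consec_nth a b l d k : S k < length l -> a = nth k l d -> b = nth (S k) l d -> consec a b l.
Proof.
  revert k; induction l as [|x l IH]; simpl; intros k Hk Ha Hb; [lia|].
  destruct k.
  - destruct l as [|y l']; simpl in *; [lia|]. subst. apply consec_cons.
  - destruct (IH k ltac:(lia) Ha Hb) as (m1 & m2 & E). exists (x :: m1), m2. rewrite E; reflexivity.
Qed.

Lemma consec_nth_inv a b l d : consec a b l -> exists k, S k < length l /\ nth k l d = a /\ nth (S k) l d = b.
Proof.
  intros (l1 & l2 & ->). exists (length l1). rewrite length_app; simpl. split; [lia|].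
  rewrite !app_nth2 by lia. rewrite Nat.sub_diag. replace (S (length l1) - length l1) with 1 by lia. simpl; auto.
Qed.

Lemma consec_map {W} (f : V -> W) a b l : consec a b l -> @ex (list W) (fun m1 => exists m2, map f l = m1 ++ f a :: f b :: m2).
Proof. intros (l1 & l2 & ->). exists (map f l1), (map f l2). rewrite map_app. reflexivity. Qed.

Lemma last_app_cons (l1 : list V) a l2 d : last (l1 ++ a :: l2) d = last (a :: l2) d.
Proof. induction l1 as [|b l1 IH]; [reflexivity|]. rewrite <- app_comm_cons.
  destruct l1; simpl in *; [reflexivity|]. exact IH. Qed.

Lemma last_cons_cons (a b : V) l d : last (a :: b :: l) d = last (b :: l) d.
Proof. reflexivity. Qed.

Lemma last_indep (a : V) l d1 d2 : last (a :: l) d1 = last (a :: l) d2.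
Proof. revert a; induction l as [|b l IH]; intros a; [reflexivity|].
  change (last (b :: l) d1 = last (b :: l) d2). apply IH. Qed.

Lemma crt_chain r u w : clos_refl_trans V r u w -> exists p, chainr r (u :: p) /\ last (u :: p) u = w.
Proof.
  intros H. apply clos_rt_rtn1 in H. induction H as [|y z Hyz Hrt IH].
  - exists []. simpl; auto.
  - destruct IH as (p & Hc & Hl). exists (p ++ [z]). split.
    + change (u :: p ++ [z]) with ((u :: p) ++ [z]).
      destruct (@exists_last _ (u :: p)) as (l' & y' & E); [discriminate|].
      rewrite E in *. rewrite last_last in Hl. subst y'.
      rewrite <- app_assoc. simpl. apply chainr_app. split; auto. simpl; auto.
    + change (u :: p ++ [z]) with ((u :: p) ++ [z]). apply last_last.
Qed.

Lemma chain_crt r u p : chainr r (u :: p) -> clos_refl_trans V r u (last (u :: p) u).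
Proof.
  revert u; induction p as [|b p IH]; intros u H.
  - apply rt_refl.
  - destruct H as [H1 H2]. eapply rt_trans. apply rt_step; eauto.
    specialize (IH b H2). rewrite last_cons_cons, (last_indep b p u b). exact IH.
Qed.

Lemma chain_crt_in r u p w : chainr r (u :: p) -> In w (u :: p) -> clos_refl_trans V r u w.
Proof.
  revert u; induction p as [|b p IH]; intros u H Hw; simpl in Hw.
  - destruct Hw as [<-|[]]. apply rt_refl.
  - destruct Hw as [<-|Hw]. apply rt_refl. destruct H as [H1 H2].
    eapply rt_trans. apply rt_step; eauto. apply IH; auto.
Qed.



Lemma shorten r u p : chainr r (u :: p) ->
  exists q, chainr r (u :: q) /\ NoDup (u :: q) /\ last (u :: q) u = last (u :: p) u /\ incl q p.
Proof.
  revert u; induction p as [|b p IH]; intros u H.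
  - exists []. repeat split; auto. constructor; auto. constructor. intros x [].
  - destruct H as [H1 H2]. destruct (IH b H2) as (q & Hc & Hn & Hl & Hi).
    destruct (classic (In u (b :: q))) as [Hin|Hnin].
    + apply in_split in Hin as (m1 & m2 & E).
      exists m2. assert (Hc' : chainr r (u :: m2)).
      { rewrite E in Hc. apply chainr_app_weak in Hc. tauto. }
      assert (Hn' : NoDup (u :: m2)).
      { rewrite E in Hn. apply NoDup_app_remove_l in Hn. auto. }
      repeat split; auto.
      * rewrite last_cons_cons, (last_indep b p u b), <- Hl, E.
        destruct m1 as [|w1 m1]. apply last_indep.
        rewrite last_app_cons. apply last_indep.
      * intros z Hz. right. apply Hi.
        destruct m1 as [|c m1]; simpl in E; injection E; intros E1 E2; subst.
        auto. apply in_or_app. right. right. auto.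
    + exists (b :: q). repeat split; auto.
      * constructor; auto.
      * rewrite !last_cons_cons, (last_indep b p u b), <- Hl. apply last_indep.
      * intros z [<-|Hz]; simpl; auto.
Qed.

End Lists.

Import ListNotations.
Set Implicit Arguments.

Section Cyc.
Variable V : Type.
Variable adj : V -> V -> Prop.
Hypothesis Hsym : forall x y, adj x y -> adj y x.

Definition chain := chainr adj.

Definition CP (a b : V) (L : list V) : Prop :=
  NoDup L /\ 3 <= length L /\ chain L /\ hd_error L = Some b /\ last L b = a.

Definition rot (m : nat) (l : list V) := skipn m l ++ firstn m l.

Lemma rot_perm m l : Permutation l (rot m l).
Proof. unfold rot. rewrite <- (firstn_skipn m l) at 1. apply Permutation_app_comm. Qed.

Lemma mod_wrap x n : n <= x -> x < n + n -> x mod n = x - n.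
Proof.
  intros H1 H2. replace x with ((x - n) + 1 * n) at 1 by lia.
  rewrite Nat.Div0.mod_add. apply Nat.mod_small. lia.
Qed.

Lemma rot_nth m l d k : m <= length l -> k < length l ->
  nth k (rot m l) d = nth ((m + k) mod length l) l d.
Proof.
  intros Hm Hk. unfold rot.
  destruct (Nat.lt_ge_cases (m + k) (length l)) as [H|H].
  - rewrite app_nth1. rewrite nth_skipn. rewrite Nat.mod_small by lia. auto.
    rewrite length_skipn. lia.
  - rewrite app_nth2; rewrite length_skipn; [|lia].
    rewrite nth_firstn. destruct (Nat.ltb_spec (k - (length l - m)) m); [|lia].
    rewrite mod_wrap by lia. f_equal. lia.
Qed.

Lemma mod_S x n : n <> 0 -> S x mod n = S (x mod n) mod n.
Proof.
  intros Hn. replace (S x) with (x + 1) by lia. replace (S (x mod n)) with (x mod n + 1) by lia.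
  rewrite Nat.Div0.add_mod_idemp_l. auto.
Qed.

Lemma is_cycle_rot l m : is_cycle adj l -> m <= length l -> chain (rot m l).
Proof.
  intros (Hnd & Hlen & Hc) Hm. destruct l as [|d l0]; [simpl in Hlen; lia|].
  set (l := d :: l0) in *.
  apply nth_chainr with (d := d). intros k Hk.
  assert (HL : length (rot m l) = length l) by (symmetry; apply Permutation_length, rot_perm).
  rewrite HL in Hk. rewrite !rot_nth by lia.
  rewrite Nat.add_succ_r. rewrite (mod_S (m+k)) by lia. apply Hc. apply Nat.mod_upper_bound. lia.
Qed.

Lemma rot_len m l : length (rot m l) = length l.
Proof. symmetry; apply Permutation_length, rot_perm. Qed.

Lemma rot_consec l i k d : i < length l -> k < length l -> k <> i ->
  consec (nth k l d) (nth (S k mod length l) l d) (rot (S i) l).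
Proof.
  intros Hi Hk Hki. set (n := length l) in *.
  set (k' := if S i <=? k then k - S i else k + n - S i).
  assert (Hk' : S k' < n /\ (S i + k') mod n = k).
  { unfold k'. destruct (Nat.leb_spec (S i) k).
    - split. lia. rewrite Nat.mod_small by lia. lia.
    - split. lia. rewrite mod_wrap by lia. lia. }
  destruct Hk' as [Hk1 Hk2].
  apply consec_nth with (d := d) (k := k'). rewrite rot_len. auto.
  - rewrite rot_nth by lia. fold n. rewrite Hk2. auto.
  - rewrite rot_nth by lia. fold n. rewrite Nat.add_succ_r, (mod_S (S i + k')) by lia. rewrite Hk2. auto.
Qed.

Lemma rot_hd l i d : i < length l -> nth 0 (rot (S i) l) d = nth (S i mod length l) l d.
Proof. intros Hi. rewrite rot_nth by lia. rewrite Nat.add_0_r. auto. Qed.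

Lemma rot_last l i d : i < length l -> last (rot (S i) l) d = nth i l d.
Proof.
  intros Hi. destruct (@exists_last _ (rot (S i) l)) as (l' & z & E).
  { intro H. apply (f_equal (@length V)) in H. rewrite rot_len in H. simpl in H. lia. }
  rewrite E, last_last.
  assert (Hz : nth (length l') (rot (S i) l) d = z).
  { rewrite E. rewrite app_nth2 by lia. rewrite Nat.sub_diag. auto. }
  assert (HL : length l' = length l - 1).
  { pose proof (rot_len (S i) l) as H. rewrite E, length_app in H. simpl in H. lia. }
  rewrite <- Hz. rewrite rot_nth by lia. f_equal. rewrite HL. rewrite mod_wrap by lia. lia.
Qed.

Lemma nth_hd_error (l : list V) d : l <> [] -> hd_error l = Some (nth 0 l d).
Proof. destruct l; simpl; congruence. Qed.

Lemma last_nth (l : list V) d : l <> [] -> last l d = nth (length l - 1) l d.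
Proof.
  intros H. destruct (@exists_last _ l H) as (l' & z & ->). rewrite last_last, length_app. simpl.
  rewrite app_nth2 by lia. replace (length l' + 1 - 1 - length l') with 0 by lia. auto.
Qed.

Lemma CP_rev a b L : CP a b L -> adj a b -> CP b a (rev L).
Proof.
  intros (Hnd & Hlen & Hc & Hh & Hl) Hab.
  destruct L as [|z L']; [discriminate|]. simpl in Hh. injection Hh as ->.
  repeat split.
  - apply NoDup_rev; auto.
  - rewrite length_rev; auto.
  - apply chainr_rev; auto.
  - destruct (@exists_last _ (b :: L')) as (l' & y & E). discriminate.
    rewrite E in Hl |- *. rewrite last_last in Hl. subst y. rewrite rev_app_distr. reflexivity.
  - simpl. apply last_last.
Qed.

Lemma cyc_to_CP l a b : is_cycle adj l -> edge_on_cycle l a b ->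
  exists L, CP a b L /\ forall c d, edge_on_cycle l c d ->
    (((c, d) = (a, b) \/ (c, d) = (b, a)) \/ consec c d L \/ consec d c L).
Proof.
  intros Hcy (i & Hi & Hab).
  pose proof Hcy as (Hnd & Hlen & Hc).
  set (n := length l) in *.
  set (L0 := rot (S i) l).
  assert (HL0 : NoDup L0 /\ 3 <= length L0 /\ chain L0).
  { split. eapply Permutation_NoDup. apply rot_perm. auto.
    split. unfold L0; rewrite rot_len; auto. apply is_cycle_rot; auto. }
  assert (Hne : L0 <> []). { intro H. apply (f_equal (@length V)) in H. unfold L0 in H; rewrite rot_len in H. simpl in H. lia. }
  assert (Hedges : forall c d, edge_on_cycle l c d ->
     (((c, d) = (nth i l a, nth (S i mod n) l a) \/ (c, d) = (nth (S i mod n) l a, nth i l a)) \/ consec c d L0 \/ consec d c L0)).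
  { intros c d (k & Hk & Hcd). fold n in Hk, Hcd.
    destruct (Nat.eq_dec k i) as [->|Hki].
    - left. destruct Hcd as [[E1 E2]|[E1 E2]].
      + left. rewrite (nth_indep l c a Hi) in E1. rewrite (nth_indep l c a (Nat.mod_upper_bound (S i) n ltac:(lia))) in E2.
        rewrite E1, E2. auto.
      + right. rewrite (nth_indep l c a Hi) in E1. rewrite (nth_indep l c a (Nat.mod_upper_bound (S i) n ltac:(lia))) in E2.
        rewrite E1, E2. auto.
    - right. pose proof (@rot_consec l i k c Hi Hk Hki) as HC. fold n in HC. fold L0 in HC.
      destruct Hcd as [[E1 E2]|[E1 E2]]; rewrite E1, E2 in HC; auto. }
  assert (Hhd : hd_error L0 = Some (nth (S i mod n) l a)).
  { rewrite (@nth_hd_error L0 a Hne). unfold L0. rewrite rot_hd; auto. }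
  assert (Hlast : forall d, last L0 d = nth i l a).
  { intros d. unfold L0. rewrite rot_last; auto. apply nth_indep; auto. }
  destruct Hab as [[E1 E2]|[E1 E2]].
  - exists L0. split.
    + destruct HL0 as (? & ? & ?). repeat split; auto. rewrite Hhd, E2; auto. rewrite Hlast; auto.
    + intros c d H. rewrite <- E1, <- E2. apply Hedges; auto.
  - assert (HCP : CP b a L0).
    { destruct HL0 as (? & ? & ?). repeat split; auto. rewrite Hhd, E2; auto. rewrite Hlast; auto. }
    exists (rev L0). split.
    + apply CP_rev; auto. pose proof (Hc i a Hi) as Hadj. rewrite E1, E2 in Hadj. apply Hsym; auto.
    + intros c d H. destruct (Hedges c d H) as [HH|[HH|HH]].
      * left. rewrite E1, E2 in HH. tauto.
      * right; right. apply consec_rev; auto.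
      * right; left. apply consec_rev; auto.
Qed.

Lemma CP_to_cyc a b L : CP a b L -> adj a b -> is_cycle adj L /\ edge_on_cycle L a b /\
  forall c d, consec c d L -> edge_on_cycle L c d.
Proof.
  intros (Hnd & Hlen & Hc & Hh & Hl) Hab.
  assert (Hne : L <> []) by (intro; subst; discriminate).
  assert (Hh' : forall d, nth 0 L d = b).
  { intros d. rewrite (@nth_hd_error L d Hne) in Hh. congruence. }
  assert (Hl' : forall d, nth (length L - 1) L d = a).
  { intros d. rewrite <- last_nth by auto. destruct L as [|z L']; [congruence|].
    rewrite (last_indep z L' d b). auto. }
  split; [|split].
  - repeat split; auto. intros i d Hi.
    destruct (Nat.eq_dec i (length L - 1)) as [->|Hne'].
    + replace (S (length L - 1)) with (length L) by lia. rewrite Nat.Div0.mod_same. rewrite Hh', Hl'. auto.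
    + rewrite Nat.mod_small by lia. apply chainr_nth; auto. lia.
  - exists (length L - 1). split. lia. left.
    replace (S (length L - 1)) with (length L) by lia. rewrite Nat.Div0.mod_same. rewrite Hh', Hl'. auto.
  - intros c d HC. destruct (consec_nth_inv c HC) as (k & Hk & E1 & E2).
    exists k. split. lia. left. rewrite Nat.mod_small by lia. auto.
Qed.

End Cyc.

Import ListNotations.
Set Implicit Arguments.

Section Trans.
Variable V : Type.
Variable adj : V -> V -> Prop.
Hypothesis Hsym : forall x y, adj x y -> adj y x.
Hypothesis Hirr : forall x, ~ adj x x.

Notation chain := (chainr adj).
Notation CP := (CP adj).

Lemma eoc_sym (l : list V) a b : edge_on_cycle l a b -> edge_on_cycle l b a.
Proof.
  intros (i & Hi & H). exists i. split; auto.
  assert (Hm : S i mod length l < length l) by (apply Nat.mod_upper_bound; lia).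
  rewrite (nth_indep l b a Hi), (nth_indep l b a Hm). tauto.
Qed.

Definition EQR a b s t := ((a, b) = (s, t) \/ (a, b) = (t, s)) \/
  exists L, CP a b L /\ (consec s t L \/ consec t s L).

Lemma EE_iff a b c d : edge_equiv adj (a, b) (c, d) <-> adj a b /\ adj c d /\ EQR a b c d.
Proof.
  unfold edge_equiv, EQR; simpl. split.
  - intros (H1 & H2 & H3). repeat split; auto.
    destruct H3 as [H3|(l & Hl & E1 & E2)]. left; auto.
    destruct (cyc_to_CP Hsym Hl E1) as (L & HL & HE).
    destruct (HE c d E2) as [HH|HH].
    + left. destruct HH as [HH|HH]; injection HH; intros; subst; auto.
    + right. exists L; auto.
  - intros (H1 & H2 & H3). repeat split; auto.
    destruct H3 as [H3|(L & HL & HC)]. left; auto.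
    right. destruct (CP_to_cyc HL H1) as (Hc & He & Hcc). exists L. split; auto. split; auto.
    destruct HC as [HC|HC]; auto. apply eoc_sym. auto.
Qed.

Lemma split_first (P : V -> Prop) l : (exists x, In x l /\ P x) ->
  exists X y Y, l = X ++ y :: Y /\ P y /\ forall z, In z X -> ~ P z.
Proof.
  induction l as [|h l IH]; intros (x & Hx & Px); [destruct Hx|].
  destruct (classic (P h)).
  - exists [], h, l. repeat split; auto.
  - destruct Hx as [<-|Hx]; [contradiction|].
    assert (He : exists x, In x l /\ P x) by eauto.
    destruct (IH He) as (X & y & Y & E & Py & HX).
    exists (h :: X), y, Y. rewrite E. repeat split; auto. intros z [<-|Hz]; auto.
Qed.

Lemma split_last (P : V -> Prop) l : (exists x, In x l /\ P x) ->
  exists Y y Z, l = Y ++ y :: Z /\ P y /\ forall z, In z Z -> ~ P z.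
Proof.
  induction l as [|h l IH]; intros (x & Hx & Px); [destruct Hx|].
  destruct (classic (exists x, In x l /\ P x)) as [He|Hne].
  - destruct (IH He) as (Y & y & Z & E & Py & HZ). exists (h :: Y), y, Z. rewrite E. auto.
  - destruct Hx as [<-|Hx].
    + exists [], h, l. repeat split; auto. intros z Hz Pz. apply Hne; eauto.
    + exfalso; eauto.
Qed.

Lemma split_fl (P : V -> Prop) l c d : In c l -> In d l -> c <> d -> P c -> P d ->
  exists X b M a Z, l = X ++ b :: M ++ a :: Z /\ P b /\ P a /\
    (forall z, In z X -> ~ P z) /\ (forall z, In z Z -> ~ P z).
Proof.
  intros Hc Hd Hcd Pc Pd.
  assert (He : exists x, In x l /\ P x) by eauto.
  destruct (split_first P l He) as (X & b & R & E & Pb & HX).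
  assert (HR : exists x, In x R /\ P x).
  { subst l. apply in_app_or in Hc, Hd.
    destruct Hc as [Hc|[<-|Hc]]; [exfalso; eapply HX; eauto| |eauto].
    destruct Hd as [Hd|[<-|Hd]]; [exfalso; eapply HX; eauto|congruence|eauto]. }
  destruct (split_last P R HR) as (M & a & Z & E2 & Pa & HZ).
  exists X, b, M, a, Z. subst. auto 10.
Qed.

Lemma split_order (l : list V) x y : In x l -> In y l -> x <> y ->
  exists P1 P2 P3, l = P1 ++ x :: P2 ++ y :: P3 \/ l = P1 ++ y :: P2 ++ x :: P3.
Proof.
  intros Hx Hy Hxy. apply in_split in Hx as (A & B & ->).
  apply in_app_or in Hy. destruct Hy as [Hy|[<-|Hy]]; [|congruence|].
  - apply in_split in Hy as (A1 & A2 & ->). exists A1, A2, B. right. rewrite <- app_assoc. reflexivity.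
  - apply in_split in Hy as (B1 & B2 & ->). exists A, B1, B2. left. reflexivity.
Qed.

Lemma NoDup_app_iff (l1 l2 : list V) : NoDup (l1 ++ l2) <->
  NoDup l1 /\ NoDup l2 /\ forall z, In z l1 -> ~ In z l2.
Proof.
  split.
  - intros H. split. eapply NoDup_app_remove_r; eauto. split. eapply NoDup_app_remove_l; eauto.
    induction l1 as [|h l1 IH]; intros z Hz; [destruct Hz|].
    simpl in H. inversion H; subst. destruct Hz as [<-|Hz].
    + intro. apply H2. apply in_or_app; auto.
    + apply IH; auto.
  - intros (H1 & H2 & H3). apply NoDup_app; auto.
Qed.

Lemma ear_replace P1 x P2 y P3 I :
  NoDup (P1 ++ x :: P2 ++ y :: P3) -> chain (P1 ++ x :: P2 ++ y :: P3) ->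
  chain (x :: I ++ [y]) -> NoDup I -> (forall z, In z I -> ~ In z (P1 ++ x :: P2 ++ y :: P3)) ->
  NoDup (P1 ++ x :: I ++ y :: P3) /\ chain (P1 ++ x :: I ++ y :: P3).
Proof.
  intros Hnd Hc HcI HndI HdI. split.
  - apply NoDup_app_iff in Hnd as (N1 & N2 & N3).
    apply NoDup_app_iff. split; auto. split.
    + change (x :: I ++ y :: P3) with ((x :: I) ++ y :: P3).
      change (x :: P2 ++ y :: P3) with ((x :: P2) ++ y :: P3) in N2.
      apply NoDup_app_iff in N2 as (M1 & M2 & M3).
      apply NoDup_app_iff. split.
      * constructor; auto. intro HxI. apply (HdI x HxI). apply in_or_app. right; left; auto.
      * split; auto. intros z [<-|Hz] Hz2.
        -- apply (M3 x). left; auto. auto.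
        -- apply (HdI z Hz). apply in_or_app; right; right. apply in_or_app; right; auto.
    + intros z Hz Hz2. destruct Hz2 as [<-|Hz2].
      * apply (N3 x Hz). left; auto.
      * apply in_app_or in Hz2. destruct Hz2 as [Hz2|Hz2].
        -- apply (HdI z Hz2). apply in_or_app; left; auto.
        -- apply (N3 z Hz). right. apply in_or_app; right; auto.
  - rewrite chainr_app in Hc |- *. destruct Hc as [C1 C2]. split; auto.
    change (x :: P2 ++ y :: P3) with ((x :: P2) ++ y :: P3) in C2.
    change (x :: I ++ y :: P3) with ((x :: I) ++ y :: P3).
    rewrite chainr_app in C2 |- *. destruct C2 as [C3 C4]. split; auto.
Qed.


Lemma chain_join (l1 : list V) u w l2 : chain (l1 ++ [u]) -> chain (w :: l2) -> adj u w -> chain (l1 ++ u :: w :: l2).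
Proof. intros H1 H2 H3. apply chainr_app. split; auto. simpl; auto. Qed.

Lemma NoDup_rot3 (A B C : list V) : NoDup (A ++ B ++ C) -> NoDup (C ++ A).
Proof.
  intros H. assert (Hp : Permutation (A ++ B ++ C) (B ++ (C ++ A))).
  { eapply perm_trans. apply Permutation_app_comm. rewrite <- app_assoc. apply Permutation_refl. }
  apply (Permutation_NoDup Hp) in H. eapply NoDup_app_remove_l; eauto.
Qed.

Lemma consec_embed (u w x y : V) (P1 I P3 : list V) : consec u w (x :: I ++ [y]) -> consec u w (P1 ++ x :: I ++ y :: P3).
Proof.
  intros H. apply consec_app_r.
  replace (x :: I ++ y :: P3) with ((x :: I ++ [y]) ++ P3) by (simpl; rewrite <- app_assoc; reflexivity).
  apply consec_app_l; auto.
Qed.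

Lemma hd_embed (P1 : list V) x (I : list V) y P3 P2 :
  hd_error (P1 ++ x :: I ++ y :: P3) = hd_error (P1 ++ x :: P2 ++ y :: P3).
Proof. destruct P1; reflexivity. Qed.

Lemma last_embed (P1 : list V) x (I : list V) y P3 P2 d :
  last (P1 ++ x :: I ++ y :: P3) d = last (P1 ++ x :: P2 ++ y :: P3) d.
Proof.
  rewrite !last_app_cons. change (x :: I ++ y :: P3) with ((x :: I) ++ y :: P3).
  change (x :: P2 ++ y :: P3) with ((x :: P2) ++ y :: P3). rewrite !last_app_cons. reflexivity.
Qed.

Lemma len_embed (P1 : list V) x (I : list V) y P3 : length (P1 ++ x :: I ++ y :: P3) < 3 -> P1 = [] /\ I = [] /\ P3 = [].
Proof.
  rewrite length_app. simpl. rewrite length_app. simpl.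
  destruct P1, I, P3; simpl; intros; try lia; auto.
Qed.

Lemma ear_general a b L1 P1 x P2 y P3 I :
  CP a b L1 -> L1 = P1 ++ x :: P2 ++ y :: P3 ->
  chain (x :: I ++ [y]) -> NoDup I -> (forall z, In z I -> ~ In z L1) ->
  (length (P1 ++ x :: I ++ y :: P3) < 3 /\ P1 = [] /\ I = [] /\ P3 = [] /\ b = x /\ a = y) \/
  CP a b (P1 ++ x :: I ++ y :: P3).
Proof.
  intros (Hnd & Hlen & Hc & Hh & Hl) E HcI HndI HdI. subst L1.
  destruct (ear_replace P1 x P2 y P3 Hnd Hc HcI HndI HdI) as [N C].
  destruct (Nat.lt_ge_cases (length (P1 ++ x :: I ++ y :: P3)) 3) as [Hs|Hs].
  - left. destruct (len_embed _ _ _ _ _ Hs) as (-> & -> & ->).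
    split; auto. repeat split; auto. simpl in Hh; congruence.
    rewrite <- Hl. change ([] ++ x :: P2 ++ [y]) with ((x :: P2) ++ [y]). rewrite last_last. auto.
  - right. repeat split; auto. rewrite (hd_embed P1 x I y P3 P2). auto.
    rewrite (last_embed P1 x I y P3 P2). auto.
Qed.

Lemma trans_core a b s t c d L1 L2 : adj a b -> adj s t -> adj c d ->
  CP a b L1 -> (consec c d L1 \/ consec d c L1) ->
  CP s t L2 -> (consec c d L2 \/ consec d c L2) -> EQR a b s t.
Proof.
  intros Hab Hst Hcd H1 Hc1 H2 Hc2.
  assert (Hne : c <> d) by (intro; subst; eapply Hirr; eauto).
  assert (Hin1 : In c L1 /\ In d L1) by (destruct Hc1 as [K|K]; apply consec_in in K; tauto).
  assert (Hin2 : In c L2 /\ In d L2) by (destruct Hc2 as [K|K]; apply consec_in in K; tauto).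
  destruct (split_fl (fun z => In z L1) L2 (proj1 Hin2) (proj2 Hin2) Hne (proj1 Hin1) (proj2 Hin1))
    as (X & be & M & al & Z & E & Hbe & Hal & HX & HZ).
  pose proof H2 as (Nd2 & Len2 & C2 & Hd2 & Hl2).
  assert (Hab' : al <> be).
  { intro; subst al. rewrite E in Nd2. apply NoDup_remove_2 in Nd2. apply Nd2. apply in_or_app. right.
    apply in_or_app. right. left. auto. }
  set (I := Z ++ X).
  assert (HndI : NoDup I).
  { unfold I. apply (@NoDup_rot3 X (be :: M ++ [al]) Z). rewrite E in Nd2.
    replace (X ++ (be :: M ++ [al]) ++ Z) with (X ++ be :: M ++ al :: Z); auto.
    simpl. rewrite <- app_assoc. reflexivity. }
  assert (HdI : forall z, In z I -> ~ In z L1).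
  { intros z Hz. apply in_app_or in Hz. destruct Hz; auto. }
  assert (HQ : chain (al :: I ++ [be]) /\ consec s t (al :: I ++ [be])).
  { assert (CZ : chain (al :: Z)).
    { rewrite E in C2. replace (X ++ be :: M ++ al :: Z) with ((X ++ be :: M) ++ al :: Z) in C2
        by (rewrite <- app_assoc; reflexivity).
      apply chainr_app in C2. tauto. }
    assert (CX : chain (X ++ [be])).
    { rewrite E in C2. apply chainr_app in C2. tauto. }
    destruct (@exists_last _ (al :: Z)) as (W & s' & EW). discriminate.
    assert (Hs' : s' = s).
    { rewrite <- Hl2. rewrite E. rewrite last_app_cons. rewrite app_comm_cons, last_app_cons.
      rewrite EW. rewrite last_last. auto. }
    assert (HXt : exists W', X ++ [be] = t :: W').
    { rewrite E in Hd2. destruct X as [|x0 X']; simpl in Hd2; injection Hd2 as ->; simpl; eauto. }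
    destruct HXt as (W' & EX).
    replace (al :: I ++ [be]) with (W ++ s :: t :: W').
    2:{ symmetry. unfold I. rewrite <- app_assoc. rewrite app_comm_cons. rewrite EW, EX, Hs'.
        rewrite <- app_assoc. reflexivity. }
    split.
    - apply chain_join; auto. rewrite <- Hs', <- EW; auto. rewrite <- EX; auto.
    - exists W, W'. reflexivity. }
  destruct HQ as [CQ SQ].
  destruct (split_order L1 Hal Hbe Hab') as (P1 & P2 & P3 & [EL|EL]).
  - destruct (@ear_general a b L1 P1 al P2 be P3 I H1 EL CQ HndI HdI) as [(_ & -> & HI & -> & -> & ->)|HCP].
    + left. apply app_eq_nil in HI as [-> ->]. simpl in E. rewrite E in Hd2, Hl2.
      simpl in Hd2. injection Hd2 as ->. rewrite app_comm_cons, last_last in Hl2. subst. auto.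
    + right. exists (P1 ++ al :: I ++ be :: P3). split; auto. left. apply consec_embed; auto.
  - assert (CQ' : chain (be :: rev I ++ [al])).
    { apply chainr_rev in CQ; auto. simpl in CQ. rewrite rev_app_distr in CQ. simpl in CQ. exact CQ. }
    assert (HdI' : forall z, In z (rev I) -> ~ In z L1).
    { intros z Hz. apply HdI. apply in_rev. auto. }
    destruct (@ear_general a b L1 P1 be P2 al P3 (rev I) H1 EL CQ' (NoDup_rev HndI) HdI') as [(_ & -> & HI & -> & -> & ->)|HCP].
    + left. assert (I = []) by (destruct I; simpl in HI; [auto|]; apply app_eq_nil in HI as [_ HI']; discriminate).
      unfold I in H. apply app_eq_nil in H as [-> ->]. simpl in E. rewrite E in Hd2, Hl2.
      simpl in Hd2. injection Hd2 as ->. rewrite app_comm_cons, last_last in Hl2. subst. auto.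
    + right. exists (P1 ++ be :: rev I ++ al :: P3). split; auto. right. apply consec_embed.
      apply consec_rev in SQ. simpl in SQ. rewrite rev_app_distr in SQ. simpl in SQ. exact SQ.
Qed.

End Trans.

Import ListNotations.
Set Implicit Arguments.
Unset Strict Implicit.

Section Lobes.
Variable V : Type.
Variable adj : V -> V -> Prop.
Hypothesis Hsym : forall x y, adj x y -> adj y x.
Hypothesis Hirr : forall x, ~ adj x x.

Notation EE := (edge_equiv adj).

Lemma EE_sym e1 e2 : EE e1 e2 -> EE e2 e1.
Proof.
  destruct e1 as [a b], e2 as [c d]. unfold edge_equiv; simpl.
  intros (H1 & H2 & [[H|H]|(l & Hl & E1 & E2)]); (split; [auto|split; [auto|]]).
  - left; left; congruence.
  - left; right. injection H; intros; subst; auto.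
  - right. exists l; auto.
Qed.

Lemma EE_swap a b e : EE (a, b) e -> EE (b, a) e.
Proof.
  destruct e as [c d]. unfold edge_equiv; simpl.
  intros (H1 & H2 & [[H|H]|(l & Hl & E1 & E2)]); (split; [auto|split; [auto|]]).
  - left; right. injection H; intros; subst; auto.
  - left; left. injection H; intros; subst; auto.
  - right. exists l. split; auto. split; auto. apply eoc_sym; auto.
Qed.

Lemma EE_refl a b : adj a b -> EE (a, b) (a, b).
Proof. intros H. split; [auto|split; [auto|]]. left; left; auto. Qed.

Lemma EE_adj a b e : EE e (a, b) -> adj a b.
Proof. intros (_ & H & _). exact H. Qed.

Lemma EE_adj1 a b e : EE (a, b) e -> adj a b.
Proof. intros (H & _ & _). exact H. Qed.

Lemma EE_swap_r a b e : EE e (a, b) -> EE e (b, a).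
Proof. intros H. apply EE_sym. apply EE_swap. apply EE_sym; auto. Qed.

Lemma EE_trans e1 e2 e3 : EE e1 e2 -> EE e2 e3 -> EE e1 e3.
Proof.
  destruct e1 as [a b], e2 as [c d], e3 as [s t]. intros H12 H23.
  pose proof H12 as K12. pose proof H23 as K23.
  apply EE_sym in H23.
  apply EE_iff in H12 as (Hab & Hcd & Q1); auto.
  apply EE_iff in H23 as (Hst & _ & Q2); auto.
  destruct Q1 as [[E|E]|(L1 & HL1 & HC1)].
  - injection E; intros; subst; auto.
  - injection E; intros; subst. apply EE_swap. auto.
  - destruct Q2 as [[E|E]|(L2 & HL2 & HC2)].
    + injection E; intros; subst; auto.
    + injection E; intros; subst. apply EE_swap_r. auto.
    + apply EE_iff; auto. split; [auto|split; [auto|]].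
      eapply trans_core with (L1 := L1) (L2 := L2) (c := c) (d := d); eauto.
Qed.

Definition lobe_of (a b : V) (H : adj a b) : lobe adj :=
  exist _ (EE (a, b)) (ex_intro _ a (ex_intro _ b (conj H eq_refl))).

Definition LP (C : lobe adj) := proj1_sig C.

Lemma LP_adj (C : lobe adj) u w : LP C (u, w) -> adj u w.
Proof. destruct C as [P (x & y & Hxy & ->)]; simpl. apply EE_adj. Qed.

Lemma LP_sym (C : lobe adj) u w : LP C (u, w) -> LP C (w, u).
Proof. destruct C as [P (x & y & Hxy & ->)]; simpl. apply EE_swap_r. Qed.

Lemma LP_eq (C : lobe adj) u w : LP C (u, w) -> LP C = EE (u, w).
Proof.
  destruct C as [P (x & y & Hxy & ->)]; simpl. intros H.
  apply functional_extensionality. intros e. apply propositional_extensionality. split.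
  - intros H'. eapply EE_trans. apply EE_sym. exact H. exact H'.
  - intros H'. eapply EE_trans. exact H. exact H'.
Qed.

Lemma lobe_ext (C D : lobe adj) : LP C = LP D -> C = D.
Proof.
  destruct C as [P HP], D as [Q HQ]; simpl. intros ->. f_equal. apply proof_irrelevance.
Qed.

Lemma lobe_eq (C D : lobe adj) u w : LP C (u, w) -> LP D (u, w) -> C = D.
Proof. intros H1 H2. apply lobe_ext. rewrite (LP_eq H1), (LP_eq H2). auto. Qed.

Lemma LP_trans (C : lobe adj) u w e : LP C (u, w) -> EE (u, w) e -> LP C e.
Proof. intros H1 H2. rewrite (LP_eq H1). auto. Qed.

Lemma lobe_of_LP a b (H : adj a b) : LP (lobe_of H) (a, b).
Proof. simpl. apply EE_refl; auto. Qed.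

Definition inl (C : lobe adj) v := exists w, LP C (v, w).

Notation am := (adj_minus adj).

Lemma am_sym a x y : am a x y -> am a y x.
Proof. intros (? & ? & ?). repeat split; auto. Qed.

Lemma crt_am_sym a x y : clos_refl_trans V (am a) x y -> clos_refl_trans V (am a) y x.
Proof.
  induction 1. apply rt_step, am_sym; auto. apply rt_refl. eapply rt_trans; eauto.
Qed.

Lemma crt_am_ne a u w : clos_refl_trans V (am a) u w -> u <> a -> w <> a.
Proof.
  intros H. apply clos_rt_rtn1 in H. destruct H as [|y z [? [? ?]] _]; auto.
Qed.

Lemma chain_am_notin a u q : chainr (am a) (u :: q) -> u <> a -> forall z, In z (u :: q) -> z <> a.
Proof.
  revert u; induction q as [|b q IH]; intros u H Hu z Hz.
  - destruct Hz as [<-|[]]; auto.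
  - destruct H as [[H1 [H2 H3]] H4]. destruct Hz as [<-|Hz]; auto. apply (IH b H4 H2 z Hz).
Qed.

Lemma chain_to_am a l : chainr adj l -> (forall z, In z l -> z <> a) -> chainr (am a) l.
Proof.
  induction l as [|x l IH]; simpl; auto. destruct l as [|y l']; auto.
  intros [H1 H2] H3. split. split; [apply H3; left; auto|split; [apply H3; right; left; auto|auto]].
  apply IH; auto.
Qed.

Lemma am_chain_adj a l : chainr (am a) l -> chainr adj l.
Proof. apply chainr_mono. intros x y (_ & _ & H); auto. Qed.

Definition B (a : V) (C : lobe adj) (w : V) := exists u, LP C (a, u) /\ clos_refl_trans V (am a) u w.

Lemma B_ne a C w : B a C w -> w <> a.
Proof.
  intros (u & Hu & Hw). apply (crt_am_ne Hw). intro; subst. apply LP_adj in Hu. apply (Hirr Hu).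
Qed.

Lemma B_step a C w w' : B a C w -> clos_refl_trans V (am a) w w' -> B a C w'.
Proof. intros (u & Hu & Hw) H. exists u. split; auto. eapply rt_trans; eauto. Qed.

Lemma edge_cyc a u u' : adj a u -> adj a u' -> u <> u' -> clos_refl_trans V (am a) u u' ->
  EE (a, u) (a, u').
Proof.
  intros Hu Hu' Hne H.
  destruct (crt_chain H) as (p & Hc & Hl).
  destruct (@shorten _ _ _ _ Hc) as (q & Hq & Hnd & Hlq & _). rewrite Hl in Hlq.
  assert (Hua : u <> a) by (intro; subst; apply (Hirr Hu)).
  assert (Hnot := chain_am_notin Hq Hua).
  apply EE_iff; auto. repeat split; auto. right.
  exists ((u :: q) ++ [a]). split.
  - repeat split.
    + apply NoDup_app_iff. split; auto. split. constructor; auto. constructor.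
      intros z Hz [E|[]]. subst z. apply (Hnot a Hz); auto.
    + rewrite length_app. simpl. destruct q; simpl in *; [congruence|lia].
    + apply chainr_app. split.
      * destruct (@exists_last _ (u :: q)) as (l' & z & E). discriminate.
        rewrite E. rewrite E in Hq. apply am_chain_adj in Hq.
        rewrite E in Hlq. rewrite last_last in Hlq. subst z.
        rewrite <- app_assoc. apply chainr_app. split; auto. simpl. split; auto.
      * simpl; auto.
    + rewrite last_last. auto.
  - right. destruct (@exists_last _ (u :: q)) as (l' & z & E). discriminate.
    rewrite E in Hlq |- *. rewrite last_last in Hlq. subst z. exists l', []. rewrite <- app_assoc. reflexivity.
Qed.

Lemma B_disj a C D w : B a C w -> B a D w -> C = D.
Proof.
  intros (u & Hu & Hw) (u' & Hu' & Hw').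
  destruct (classic (u = u')) as [<-|Hne].
  - eapply lobe_eq; eauto.
  - assert (H : clos_refl_trans V (am a) u u') by (eapply rt_trans; [exact Hw| apply crt_am_sym; exact Hw']).
    pose proof (edge_cyc (LP_adj Hu) (LP_adj Hu') Hne H) as HE.
    apply (lobe_eq (u := a) (w := u')); auto. eapply LP_trans; eauto.
Qed.

Lemma cover_aux a z : clos_refl_trans V adj a z -> z = a \/ exists u, adj a u /\ clos_refl_trans V (am a) u z.
Proof.
  intros H. apply clos_rt_rtn1 in H. induction H as [|y z Hyz Hrt IH]; auto.
  destruct (classic (z = a)) as [->|Hza]; auto. right.
  destruct IH as [->|(u & Hu & Hw)].
  - exists z. split; auto. apply rt_refl.
  - exists u. split; auto. eapply rt_trans; eauto. apply rt_step. repeat split; auto.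
    apply (crt_am_ne Hw). intro; subst; apply (Hirr Hu).
Qed.

Lemma cover a w : clos_refl_trans V adj a w -> w <> a -> exists C, B a C w.
Proof.
  intros H Hne. destruct (cover_aux H) as [->|(u & Hu & Hw)]; [congruence|].
  exists (lobe_of Hu). exists u. split; auto. apply lobe_of_LP.
Qed.

Lemma B_side (C : lobe adj) a v : inl C a -> inl C v -> a <> v -> B a C v.
Proof.
  intros (u & Hu) (t & Ht) Hav.
  assert (HE : EE (a, u) (v, t)) by (rewrite <- (LP_eq Hu); auto).
  pose proof HE as HE'. apply EE_iff in HE' as (Hau & Hvt & Q); auto.
  destruct Q as [[E|E]|(L & HL & HC)].
  - injection E; intros; congruence.
  - injection E; intros; subst. exists v. split; auto. apply rt_refl.
  - exists u. split; auto.
    destruct HL as (Hnd & Hlen & Hc & Hh & Hl).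
    assert (Hv : In v L) by (destruct HC as [K|K]; apply consec_in in K; tauto).
    destruct L as [|u0 L']; [discriminate|]. simpl in Hh. injection Hh as ->.
    destruct (@exists_last _ (u :: L')) as (R & z & E). discriminate.
    rewrite E in Hl. rewrite last_last in Hl. subst z.
    rewrite E in Hv, Hnd, Hc.
    assert (HvR : In v R).
    { apply in_app_or in Hv. destruct Hv as [?|[?|[]]]; auto. congruence. }
    assert (HaR : ~ In a R) by (intro; eapply NoDup_remove_2 in Hnd; apply Hnd; rewrite app_nil_r; auto).
    apply chainr_app_weak in Hc as [Hc _].
    destruct R as [|r R']; [destruct HvR|].
    assert (r = u) by (destruct L'; simpl in E; injection E; intros; subst; auto; destruct R'; discriminate).
    subst r.
    apply chain_crt_in with (p := R'); auto.
    apply chain_to_am; auto. intros z Hz ->. auto.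
Qed.

Lemma avoid2 p q s t : clos_refl_trans V (am p) s t -> s <> q ->
  (clos_refl_trans V (am q) s t /\ t <> q) \/ clos_refl_trans V (am p) s q.
Proof.
  intros H Hsq. apply clos_rt_rtn1 in H. induction H as [|y z Hyz Hrt IH].
  - left. split; auto. apply rt_refl.
  - destruct IH as [[H1 H2]|H1].
    + destruct (classic (z = q)) as [->|Hzq].
      * right. eapply rt_trans. apply clos_rtn1_rt; exact Hrt. apply rt_step; auto.
      * left. split; auto. eapply rt_trans; eauto. apply rt_step. destruct Hyz as (? & ? & ?). repeat split; auto.
    + right; auto.
Qed.

End Lobes.

Import ListNotations.
Set Implicit Arguments.
Unset Strict Implicit.

Section Auto.
Variable V : Type.
Variable adj : V -> V -> Prop.
Hypothesis Hsym : forall x y, adj x y -> adj y x.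
Hypothesis Hirr : forall x, ~ adj x x.
Variables g h : V -> V.
Hypothesis Hgh : forall x, g (h x) = x.
Hypothesis Hhg : forall x, h (g x) = x.
Hypothesis Hg : forall x y, adj x y <-> adj (g x) (g y).

Notation EE := (edge_equiv adj).

Lemma g_inj x y : g x = g y -> x = y.
Proof. intros E. rewrite <- (Hhg x), <- (Hhg y), E. auto. Qed.

Lemma Hh x y : adj x y <-> adj (h x) (h y).
Proof. rewrite (Hg (h x) (h y)), !Hgh. tauto. Qed.

Lemma chain_map l : chainr adj l -> chainr adj (map g l).
Proof.
  induction l as [|a l IH]; auto. destruct l as [|b l']; auto.
  intros [H1 H2]. change (chainr adj (map g (a::b::l'))) with (adj (g a) (g b) /\ chainr adj (map g (b :: l'))).
  split. apply (proj1 (Hg _ _)); auto. apply IH; auto.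
Qed.

Lemma last_map' l d : last (map g l) (g d) = g (last l d).
Proof. induction l as [|a l IH]; simpl; auto. destruct l; simpl in *; auto. Qed.

Lemma CP_map a b L : CP adj a b L -> CP adj (g a) (g b) (map g L).
Proof.
  intros (Hnd & Hlen & Hc & Hhd & Hl). repeat split.
  - apply NoDup_map_NoDup_ForallPairs; auto. intros x y _ _. apply g_inj.
  - rewrite length_map; auto.
  - apply chain_map; auto.
  - destruct L; simpl in *; congruence.
  - rewrite last_map'. congruence.
Qed.

Lemma consec_map' a b l : consec a b l -> consec (g a) (g b) (map g l).
Proof. intros H. destruct (consec_map g H) as (m1 & m2 & E). exists m1, m2. auto. Qed.

Lemma EE_map a b c d : EE (a, b) (c, d) -> EE (g a, g b) (g c, g d).
Proof.
  intros H. apply EE_iff in H as (H1 & H2 & Q); auto. apply EE_iff; auto.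
  split. apply (proj1 (Hg _ _)); auto. split. apply (proj1 (Hg _ _)); auto.
  destruct Q as [[E|E]|(L & HL & HC)].
  - left; left. injection E; intros; subst; auto.
  - left; right. injection E; intros; subst; auto.
  - right. exists (map g L). split. apply CP_map; auto.
    destruct HC as [HC|HC]; [left|right]; apply consec_map'; auto.
Qed.

Lemma EE_map_iff a b c d : EE (a, b) (c, d) <-> EE (g a, g b) (g c, g d).
Proof.
  split. apply EE_map.
  intros H. 
  assert (K : forall x y z w, EE (x, y) (z, w) -> EE (h x, h y) (h z, h w)).
  { intros x y z w H'. apply EE_iff in H' as (H1 & H2 & Q); auto. apply EE_iff; auto.
    split. apply (proj1 (Hh _ _)); auto. split. apply (proj1 (Hh _ _)); auto.
    destruct Q as [[E|E]|(L & (Hnd & Hlen & Hc & Hhd & Hl) & HC)].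
    - left; left. injection E; intros; subst; auto.
    - left; right. injection E; intros; subst; auto.
    - right. exists (map h L). split.
      + repeat split.
        * apply NoDup_map_NoDup_ForallPairs; auto. intros p q _ _ E. rewrite <- (Hgh p), <- (Hgh q), E; auto.
        * rewrite length_map; auto.
        * clear -Hc Hgh Hg. induction L as [|p L IH]; auto. destruct L as [|q L']; auto.
          destruct Hc as [Hc1 Hc2]. change (chainr adj (map h (p::q::L'))) with (adj (h p) (h q) /\ chainr adj (map h (q :: L'))). split. apply (proj1 (Hh _ _)); auto. apply IH; auto.
        * destruct L; simpl in *; congruence.
        * clear -Hl. revert Hl. generalize y. induction L as [|p L IH]; intros y0 Hl; simpl in *; subst; auto.
          destruct L; simpl in *; auto.
      + destruct HC as [HC|HC]; [left|right]; destruct (consec_map h HC) as (m1 & m2 & E); exists m1, m2; auto. }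
  apply K in H. rewrite !Hhg in H. auto.
Qed.

Definition img_pred (C : lobe adj) : V * V -> Prop := fun e => LP C (h (fst e), h (snd e)).

Lemma img_ok (C : lobe adj) : exists x y, adj x y /\ img_pred C = EE (x, y).
Proof.
  destruct C as [P (x & y & Hxy & ->)]. exists (g x), (g y). split. apply (proj1 (Hg _ _)); auto.
  unfold img_pred, LP; simpl. apply functional_extensionality. intros [a b]. simpl.
  apply propositional_extensionality. rewrite (EE_map_iff x y (h a) (h b)). rewrite !Hgh. tauto.
Qed.

Definition img (C : lobe adj) : lobe adj := exist _ (img_pred C) (img_ok C).

Lemma img_LP C a b : LP (img C) (a, b) <-> LP C (h a, h b).
Proof. unfold img, LP, img_pred; simpl. tauto. Qed.

Lemma img_LP' C a b : LP (img C) (g a, g b) <-> LP C (a, b).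
Proof. rewrite img_LP, !Hhg. tauto. Qed.

Lemma LP_map (C : lobe adj) x y a b : LP C (x, y) -> LP C (g x, g y) -> (LP C (a, b) <-> LP C (g a, g b)).
Proof.
  intros H1 H2. pose proof (LP_eq Hsym Hirr H1) as E1. pose proof (LP_eq Hsym Hirr H2) as E2.
  transitivity (EE (x, y) (a, b)). rewrite E1; tauto. rewrite E2. apply EE_map_iff.
Qed.

End Auto.

Lemma sig_eq {A} (P : A -> Prop) (x y : sig P) : proj1_sig x = proj1_sig y -> x = y.
Proof. destruct x, y; simpl; intros ->. f_equal. apply proof_irrelevance. Qed.

Lemma bij_inv {A} (f : A -> A) : bijective_map f -> exists g, (forall a, g (f a) = a) /\ (forall b, f (g b) = b).
Proof. auto. Qed.

Import ListNotations.
Set Implicit Arguments.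
Unset Strict Implicit.

Section Fwd.
Variable V : Type.
Variable adj : V -> V -> Prop.
Hypothesis Hsym : forall x y, adj x y -> adj y x.
Hypothesis Hirr : forall x, ~ adj x x.

Definition vert_map (C D : lobe adj) (g : V -> V)
  (HG : forall a b, LP C (a, b) -> LP D (g a, g b)) (z : lobe_vert C) : lobe_vert D :=
  exist _ (g (proj1_sig z)) (let (w, Hw) := proj2_sig z in ex_intro _ (g w) (HG _ _ Hw)).

Lemma lobe_iso (C D : lobe adj) (g h : V -> V) :
  (forall x, g (h x) = x) -> (forall x, h (g x) = x) ->
  (forall a b, LP C (a, b) <-> LP D (g a, g b)) ->
  exists F : lobe_vert C -> lobe_vert D, bijective_map F /\
    (forall x y, lobe_adj x y <-> lobe_adj (F x) (F y)) /\ forall z, proj1_sig (F z) = g (proj1_sig z).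
Proof.
  intros Hgh Hhg HG.
  assert (HG1 : forall a b, LP C (a, b) -> LP D (g a, g b)) by (intros; apply HG; auto).
  assert (HG2 : forall a b, LP D (a, b) -> LP C (h a, h b)).
  { intros a b H. apply HG. rewrite !Hgh. auto. }
  exists (vert_map HG1). split; [|split].
  - exists (vert_map HG2). split; intros; apply sig_eq; simpl; auto.
  - intros [x Hx] [y Hy]. unfold lobe_adj; simpl. apply HG.
  - intros; reflexivity.
Qed.

Lemma get_auto (Hat : arc_transitive adj) x y x' y' : adj x y -> adj x' y' ->
  exists g h, (forall a, g (h a) = a) /\ (forall a, h (g a) = a) /\ (forall a b, adj a b <-> adj (g a) (g b))
    /\ g x = x' /\ g y = y'.
Proof.
  intros H1 H2. destruct (Hat x y x' y' H1 H2) as (f & ((f' & E1 & E2) & Hf) & F1 & F2).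
  exists f, f'. auto.
Qed.

Lemma forward (Hconn : connectivity_one adj) (Hat : arc_transitive adj) :
  (forall C : lobe adj, arc_transitive (@lobe_adj V adj C)) /\
  (forall C D : lobe adj, graph_isomorphic (@lobe_adj V adj C) (@lobe_adj V adj D)) /\
  (forall u v : V, same_card (lobes_at adj u) (lobes_at adj v)).
Proof.
  split; [|split].
  - intros C [a Ha] [b Hb] [a' Ha'] [b' Hb'] Hab Hab'. unfold lobe_adj in Hab, Hab'; simpl in *.
    destruct (get_auto Hat (LP_adj Hab) (LP_adj Hab')) as (g & h & Hgh & Hhg & Hg & E1 & E2).
    assert (HG : forall u w, LP C (u, w) <-> LP C (g u, g w)).
    { intros u w. apply (LP_map Hsym Hirr Hgh Hhg Hg) with (x := a) (y := b); auto. rewrite E1, E2; auto. }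
    destruct (lobe_iso Hgh Hhg HG) as (F & HF & HFa & HFv).
    exists F. split. split; auto. split; apply sig_eq; rewrite HFv; simpl; auto.
  - intros [P (x & y & Hxy & ->)] [Q (x' & y' & Hxy' & ->)].
    destruct (get_auto Hat Hxy Hxy') as (g & h & Hgh & Hhg & Hg & E1 & E2).
    edestruct (@lobe_iso (exist _ _ (ex_intro _ x (ex_intro _ y (conj Hxy eq_refl))))
                         (exist _ _ (ex_intro _ x' (ex_intro _ y' (conj Hxy' eq_refl)))) g h Hgh Hhg)
      as (F & HF & HFa & _).
    { intros a b. unfold LP; simpl. rewrite <- E1, <- E2. eapply EE_map_iff; eauto. }
    exists F. split; auto.
  - intros u v.
    assert (Hnb : forall z, exists z', adj z z').
    { intros z. destruct Hconn as ((_ & Hc) & (p & q & Hpq) & _).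
      assert (exists w, w <> z) as [w Hw].
      { destruct (classic (p = z)); [exists q|exists p]; congruence. }
      destruct (cover_aux Hirr (Hc z w)) as [->|(z' & Hz' & _)]; [congruence|eauto]. }
    destruct (Hnb u) as (u1 & Hu1). destruct (Hnb v) as (v1 & Hv1).
    destruct (get_auto Hat Hu1 Hv1) as (g & h & Hgh & Hhg & Hg & E1 & E2).
    pose proof (Hh Hgh Hg) as Hhh.
    set (I1 := img Hsym Hgh Hhg Hg).
    set (I2 := img Hsym Hhg Hgh Hhh).
    assert (K1 : forall C : lobe adj, (exists w, LP C (u, w)) -> exists w, LP (I1 C) (v, w)).
    { intros C (w & Hw). exists (g w). unfold I1. rewrite <- E1. apply img_LP'. auto. }
    assert (K2 : forall C : lobe adj, (exists w, LP C (v, w)) -> exists w, LP (I2 C) (u, w)).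
    { intros C (w & Hw). exists (h w). unfold I2. replace u with (h v) by (rewrite <- E1; auto). apply img_LP'. auto. }
    exists (fun c => exist _ (I1 (proj1_sig c)) (K1 _ (proj2_sig c))).
    exists (fun c => exist _ (I2 (proj1_sig c)) (K2 _ (proj2_sig c))).
    split; intros [C HC]; apply sig_eq; simpl; apply lobe_ext; apply functional_extensionality;
      intros [a b]; apply propositional_extensionality; unfold I1, I2; rewrite !img_LP; simpl.
    + rewrite ?Hgh, ?Hhg. tauto.
    + rewrite ?Hgh, ?Hhg. tauto.
Qed.

End Fwd.

Import ListNotations.
Set Implicit Arguments.
Unset Strict Implicit.

Lemma least_ex (P : nat -> Prop) : (exists n, P n) -> exists n, P n /\ forall m, P m -> n <= m.
Proof.
  intros [n Hn]. induction n as [n IH] using (well_founded_induction lt_wf).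
  destruct (classic (exists m, m < n /\ P m)) as [(m & Hm & Pm)|Hno].
  - apply (IH m Hm Pm).
  - exists n. split; auto. intros m Pm. destruct (Nat.lt_ge_cases m n); auto. exfalso; eauto.
Qed.

Section Rooted.
Variable V : Type.
Variable adj : V -> V -> Prop.
Hypothesis Hsym : forall x y, adj x y -> adj y x.
Hypothesis Hirr : forall x, ~ adj x x.
Hypothesis Hc : forall u v, clos_refl_trans V adj u v.
Variable r : V.
Variable C0 : lobe adj.
Hypothesis HC0 : inl C0 r.

Notation am := (adj_minus adj).
Notation B := (@B V adj).
Notation inl := (@inl V adj).

Inductive wk : nat -> V -> Prop :=
| wk0 : wk 0 r
| wkS n u w : wk n u -> adj u w -> wk (S n) w.

Lemma wk_ex w : exists n, wk n w.
Proof.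
  pose proof (Hc r w) as H. apply clos_rt_rtn1 in H. induction H as [|y z Hyz _ [n Hn]].
  - exists 0; constructor.
  - exists (S n). econstructor; eauto.
Qed.

Definition dd (w : V) : nat := proj1_sig (constructive_indefinite_description _ (least_ex (wk_ex w))).

Lemma dd_spec w : wk (dd w) w /\ forall m, wk m w -> dd w <= m.
Proof. unfold dd. destruct (constructive_indefinite_description _ _) as [n Hn]. simpl. auto. Qed.

Lemma dd_pred w : w <> r -> exists u, adj u w /\ dd u < dd w.
Proof.
  intros Hw. destruct (dd_spec w) as [H1 _]. remember (dd w) as n. destruct H1 as [|n u w Hu Huw].
  - congruence.
  - exists u. split; auto. destruct (dd_spec u) as [_ H2]. specialize (H2 n Hu). lia.
Qed.

Lemma dd_r_avoid a u : dd u < dd a -> clos_refl_trans V (am a) u r.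
Proof.
  remember (dd u) as n. revert u Heqn. induction n as [n IH] using (well_founded_induction lt_wf).
  intros u En Hlt. destruct (classic (u = r)) as [->|Hur]. apply rt_refl.
  destruct (dd_pred Hur) as (u' & Hu' & Hlt').
  apply rt_trans with u'. apply rt_step. split; [|split].
  - intro; subst; lia.
  - intro; subst; lia.
  - apply Hsym; auto.
  - apply (IH (dd u')); auto; lia.
Qed.

Lemma dd_lt a u : u <> a -> ~ clos_refl_trans V (am a) u r -> dd a < dd u.
Proof.
  remember (dd u) as n. revert u Heqn. induction n as [n IH] using (well_founded_induction lt_wf).
  intros u En Hua Hno. destruct (classic (u = r)) as [->|Hur]. exfalso; apply Hno, rt_refl.
  destruct (dd_pred Hur) as (u' & Hu' & Hlt').
  destruct (classic (u' = a)) as [->|Hu'a]. lia.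
  assert (dd a < dd u'). { apply (IH (dd u') ltac:(lia) u'); auto. intro K. apply Hno. eapply rt_trans; [|exact K].
    apply rt_step. split; [auto|split; [auto|apply Hsym; auto]]. }
  lia.
Qed.

Lemma lobe_has_vertex (D : lobe adj) : exists a, inl D a.
Proof. destruct D as [P (x0 & y0 & Hxy & ->)]. exists x0, y0. simpl. apply EE_refl; auto. Qed.

Lemma inl_LP (D : lobe adj) a b : LP D (a, b) -> inl D a /\ inl D b.
Proof. intros H. split. exists b; auto. exists a. apply LP_sym; auto. Qed.

Lemma entry_ex (D : lobe adj) : exists a, inl D a /\ ~ B a D r.
Proof.
  destruct (least_ex (P := fun n => exists a, inl D a /\ dd a = n)) as (n & (a & Ha & Hd) & Hmin).
  { destruct (lobe_has_vertex D) as [a Ha]. eauto. }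
  exists a. split; auto. intros HB.
  assert (Har : r <> a) by (apply (B_ne Hirr HB)).
  destruct (dd_pred (not_eq_sym Har)) as (u & Hu & Hlt).
  assert (Hau : adj a u) by (apply Hsym; auto).
  assert (HF : B a (lobe_of Hau) r).
  { exists u. split. apply lobe_of_LP; auto. apply dd_r_avoid; auto. }
  pose proof (B_disj Hsym Hirr HF HB) as E.
  assert (inl D u). { rewrite <- E. apply (inl_LP (lobe_of_LP Hau)). }
  specialize (Hmin (dd u) (ex_intro _ u (conj H eq_refl))). lia.
Qed.

Lemma entry_uniq (D : lobe adj) a a' : inl D a -> ~ B a D r -> inl D a' -> ~ B a' D r -> a = a'.
Proof.
  intros Ha HBa Ha' HBa'. apply NNPP. intros Hne.
  destruct (classic (r = a)) as [<-|Hra].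
  { apply HBa'. apply B_side; auto. }
  destruct (classic (r = a')) as [<-|Hra'].
  { apply HBa. apply B_side; auto. }
  destruct (cover Hirr (Hc a' r) Hra') as (F & HF).
  assert (HFD : F <> D) by (intro; subst; contradiction).
  destruct HF as (u' & Hu' & Hw).
  assert (Hside : B a' D a) by (apply B_side; auto).
  destruct (classic (u' = a)) as [->|Hu'a].
  { apply HFD. apply (B_disj Hsym Hirr (a := a') (w := a)); auto. exists a. split; auto. apply rt_refl. }
  destruct (avoid2 Hw Hu'a) as [[K1 _]|K2].
  - apply HBa. apply B_step with u'; auto.
    apply B_step with a'. apply B_side; auto. apply rt_step. split; [auto|split; [auto|apply (LP_adj Hu')]].
  - apply HFD. apply (B_disj Hsym Hirr (a := a') (w := a)); auto. exists u'. split; auto.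
Qed.

Definition entry (D : lobe adj) : V := proj1_sig (constructive_indefinite_description _ (entry_ex D)).

Lemma entry_spec D : inl D (entry D) /\ ~ B (entry D) D r.
Proof. unfold entry. destruct (constructive_indefinite_description _ _) as [a Ha]. simpl. auto. Qed.

Lemma entry_eq D a : inl D a -> ~ B a D r -> entry D = a.
Proof. intros. destruct (entry_spec D). eapply entry_uniq; eauto. Qed.

Lemma nonentry_B D a : inl D a -> a <> entry D -> B a D r.
Proof. intros Ha Hne. apply NNPP. intro K. apply Hne. symmetry. apply entry_eq; auto. Qed.

Lemma home_ex w : w <> r -> exists C, B w C r.
Proof. intros Hw. apply (cover Hirr (Hc w r)). auto. Qed.

Definition H (w : V) : lobe adj :=
  match excluded_middle_informative (w = r) with
  | left _ => C0
  | right Hne => proj1_sig (constructive_indefinite_description _ (home_ex Hne))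
  end.

Lemma H_r : H r = C0.
Proof. unfold H. destruct (excluded_middle_informative (r = r)); congruence. Qed.

Lemma H_spec w : w <> r -> B w (H w) r.
Proof.
  intros Hw. unfold H. destruct (excluded_middle_informative (w = r)); [congruence|].
  destruct (constructive_indefinite_description _ _). simpl. auto.
Qed.

Lemma B_inl a C w : B a C w -> inl C a.
Proof. intros (u & Hu & _). exists u; auto. Qed.

Lemma H_inl w : inl (H w) w.
Proof.
  destruct (classic (w = r)) as [->|Hw]. rewrite H_r; auto. apply (B_inl (H_spec Hw)).
Qed.

Lemma H_uniq w D : w <> r -> B w D r -> D = H w.
Proof. intros Hw HB. apply (B_disj Hsym Hirr HB (H_spec Hw)). Qed.

Lemma entry_r D : inl D r -> entry D = r.
Proof. intros HD. apply entry_eq; auto. intro K. apply (B_ne Hirr K). auto. Qed.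

Lemma nonentry_H D w : inl D w -> w <> entry D -> w <> r /\ H w = D.
Proof.
  intros Hw Hne. assert (Hwr : w <> r) by (intro; subst; apply Hne; symmetry; apply entry_r; auto).
  split; auto. symmetry. apply H_uniq; auto. apply nonentry_B; auto.
Qed.

Lemma H_entry_ne w : w <> r -> entry (H w) <> w.
Proof. intros Hw E. destruct (entry_spec (H w)) as [_ K]. rewrite E in K. apply K, H_spec; auto. Qed.

Lemma entry_other D w : inl D w -> D <> H w -> entry D = w.
Proof.
  intros Hw Hne. apply NNPP. intro K. apply Hne. symmetry. apply (nonentry_H Hw). auto.
Qed.

Lemma H_entry_dd w : w <> r -> dd (entry (H w)) < dd w.
Proof.
  intros Hw. set (a := entry (H w)). pose proof (H_entry_ne Hw) as Hne. fold a in Hne.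
  destruct (entry_spec (H w)) as [Ha HBa]. fold a in Ha, HBa.
  apply dd_lt. auto. intro K. apply HBa.
  apply B_step with w; auto. apply B_side; auto. apply H_inl.
Qed.

Lemma entry_C0 : entry C0 = r.
Proof. apply entry_r; auto. Qed.

End Rooted.

Import ListNotations.
Set Implicit Arguments.
Unset Strict Implicit.

Section Choice.
Variable V : Type.
Variable adj : V -> V -> Prop.
Hypothesis Hsym : forall x y, adj x y -> adj y x.
Hypothesis Hirr : forall x, ~ adj x x.
Notation inl := (@inl V adj).

Definition ext_fun (D D' : lobe adj) (F : lobe_vert D -> lobe_vert D') (u : V) : V :=
  match excluded_middle_informative (inl D u) with
  | left H => proj1_sig (F (exist _ u H))
  | right _ => u
  end.

Lemma ext_fun_val (D D' : lobe adj) (F : lobe_vert D -> lobe_vert D') u (H : inl D u) : ext_fun F u = proj1_sig (F (exist _ u H)).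
Proof.
  unfold ext_fun. destruct (excluded_middle_informative (inl D u)) as [H'|H']; [|contradiction].
  rewrite (proof_irrelevance _ H' H). reflexivity.
Qed.

Definition psi_spec (D D' : lobe adj) (psi : V -> V) : Prop :=
  (forall u, inl D u -> inl D' (psi u)) /\
  (forall u w, inl D u -> inl D w -> psi u = psi w -> u = w) /\
  (forall u', inl D' u' -> exists u, inl D u /\ psi u = u') /\
  (forall u w, inl D u -> inl D w -> (LP D (u, w) <-> LP D' (psi u, psi w))).

Lemma ext_fun_spec (D D' : lobe adj) (F : lobe_vert D -> lobe_vert D') :
  bijective_map F -> (forall x y, lobe_adj x y <-> lobe_adj (F x) (F y)) -> psi_spec D D' (ext_fun F).
Proof.
  intros (G & HGF & HFG) HF. split; [|split; [|split]].
  - intros u Hu. rewrite (ext_fun_val F Hu). apply (proj2_sig (F _)).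
  - intros u w Hu Hw E. rewrite (ext_fun_val F Hu), (ext_fun_val F Hw) in E.
    apply sig_eq in E. apply (f_equal G) in E. rewrite !HGF in E. injection E; auto.
  - intros u' Hu'. set (c := G (exist _ u' Hu')). exists (proj1_sig c). split. apply (proj2_sig c).
    rewrite (ext_fun_val F (proj2_sig c)).
    assert (Ec : exist (inl D) (proj1_sig c) (proj2_sig c) = c) by (destruct c; reflexivity).
    rewrite Ec. unfold c. rewrite HFG. reflexivity.
  - intros u w Hu Hw. rewrite (ext_fun_val F Hu), (ext_fun_val F Hw).
    apply (HF (exist _ u Hu) (exist _ w Hw)).
Qed.

Lemma psi_ex (D D' : lobe adj) a b a' b' : LP D (a, b) -> LP D' (a', b') ->
  graph_isomorphic (@lobe_adj V adj D) (@lobe_adj V adj D') -> arc_transitive (@lobe_adj V adj D') ->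
  exists psi, psi_spec D D' psi /\ psi a = a' /\ psi b = b'.
Proof.
  intros Hab Hab' (F0 & (G0 & H1 & H2) & HF0) Hat.
  assert (Ha : inl D a) by (exists b; auto).
  assert (Hb : inl D b) by (exists a; apply LP_sym; auto).
  assert (Ha' : inl D' a') by (exists b'; auto).
  assert (Hb' : inl D' b') by (exists a'; apply LP_sym; auto).
  set (ha := exist (fun v => inl D v) a Ha). set (hb := exist (fun v => inl D v) b Hb).
  set (ha' := exist (fun v => inl D' v) a' Ha'). set (hb' := exist (fun v => inl D' v) b' Hb').
  assert (K : lobe_adj (F0 ha) (F0 hb)) by (apply HF0; exact Hab).
  destruct (Hat _ _ ha' hb' K Hab') as (A & ((A' & A1 & A2) & HA) & E1 & E2).
  set (F1 := fun z => A (F0 z)).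
  assert (HB1 : bijective_map F1).
  { exists (fun z => G0 (A' z)). unfold F1. split; intros; rewrite ?A1, ?H1, ?H2, ?A2; auto. }
  assert (HF1 : forall x y, lobe_adj x y <-> lobe_adj (F1 x) (F1 y)).
  { intros x y. unfold F1. rewrite HF0. apply HA. }
  exists (ext_fun F1). split. apply ext_fun_spec; auto.
  split.
  - rewrite (ext_fun_val F1 Ha). unfold F1. transitivity (proj1_sig (A (F0 ha))). reflexivity. rewrite E1. reflexivity.
  - rewrite (ext_fun_val F1 Hb). unfold F1. transitivity (proj1_sig (A (F0 hb))). reflexivity. rewrite E2. reflexivity.
Qed.

Definition sigma_spec (v : V) (P : lobe adj) (v' : V) (P' : lobe adj) (s : lobe adj -> lobe adj) : Prop :=
  (forall D, inl D v -> D <> P -> inl (s D) v' /\ s D <> P') /\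
  (forall D1 D2, inl D1 v -> D1 <> P -> inl D2 v -> D2 <> P -> s D1 = s D2 -> D1 = D2) /\
  (forall D', inl D' v' -> D' <> P' -> exists D, inl D v /\ D <> P /\ s D = D').

Lemma sigma_ex v P v' P' : inl P v -> inl P' v' -> same_card (lobes_at adj v) (lobes_at adj v') ->
  exists s, sigma_spec v P v' P' s.
Proof.
  intros HP HP' (beta & beta' & K1 & K2).
  set (bh := fun D : lobe adj => match excluded_middle_informative (inl D v) with
                                 | left H => proj1_sig (beta (exist _ D H)) | right _ => D end).
  assert (bh_val : forall D (H : inl D v), bh D = proj1_sig (beta (exist _ D H))).
  { intros D H. unfold bh. destruct (excluded_middle_informative (inl D v)); [|contradiction].
    match goal with |- context [exist _ D ?p] => rewrite (proof_irrelevance _ p H) end. reflexivity. }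
  assert (bh_in : forall D, inl D v -> inl (bh D) v').
  { intros D H. rewrite (bh_val D H). apply (proj2_sig (beta _)). }
  assert (bh_inj : forall D1 D2, inl D1 v -> inl D2 v -> bh D1 = bh D2 -> D1 = D2).
  { intros D1 D2 H1 H2 E. rewrite (bh_val D1 H1), (bh_val D2 H2) in E. apply sig_eq in E.
    apply (f_equal beta') in E. rewrite !K1 in E. injection E; auto. }
  assert (bh_surj : forall D', inl D' v' -> exists D, inl D v /\ bh D = D').
  { intros D' H'. set (c := beta' (exist _ D' H')). exists (proj1_sig c). split. apply (proj2_sig c).
    rewrite (bh_val _ (proj2_sig c)).
    assert (Ec : exist (fun C : lobe adj => exists w : V, proj1_sig C (v, w)) (proj1_sig c) (proj2_sig c) = c) by (destruct c; reflexivity).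
    rewrite Ec. unfold c. rewrite K2. reflexivity. }
  set (Q := bh P).
  exists (fun D => let E := bh D in
          if excluded_middle_informative (E = P') then Q
          else if excluded_middle_informative (E = Q) then P' else E).
  assert (NQ : forall D, inl D v -> D <> P -> bh D <> Q).
  { intros D H HD E. apply HD. apply bh_inj; auto. }
  split; [|split].
  - intros D H HD. simpl. pose proof (NQ D H HD) as NQD.
    destruct (excluded_middle_informative (bh D = P')) as [E|E].
    + split. unfold Q; apply bh_in; auto. rewrite <- E. auto.
    + destruct (excluded_middle_informative (bh D = Q)) as [E'|E']; [contradiction|].
      split; auto.
  - intros D1 D2 H1 HD1 H2 HD2. simpl. pose proof (NQ D1 H1 HD1). pose proof (NQ D2 H2 HD2).
    destruct (excluded_middle_informative (bh D1 = P')) as [E1|E1];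
    destruct (excluded_middle_informative (bh D2 = P')) as [E2|E2];
    repeat match goal with |- context [excluded_middle_informative ?p] => destruct (excluded_middle_informative p); try contradiction end;
    intros E; try (apply bh_inj; auto; congruence).
  - intros D' H' HD'. simpl.
    destruct (classic (D' = Q)) as [EQ|NEQ].
    + destruct (bh_surj P' HP') as (D & HD & ED). exists D. split; auto. split.
      * intro; subst D. apply HD'. rewrite EQ. unfold Q. auto.
      * destruct (excluded_middle_informative (bh D = P')); [auto|contradiction].
    + destruct (bh_surj D' H') as (D & HD & ED). exists D. split; auto. split.
      * intro; subst D. apply NEQ. rewrite <- ED. reflexivity.
      * rewrite ED. destruct (excluded_middle_informative (D' = P')); [contradiction|].
        destruct (excluded_middle_informative (D' = Q)); [contradiction|auto].
Qed.

End Choice.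

Import ListNotations.
Set Implicit Arguments.
Unset Strict Implicit.

Section Back.
Variable V : Type.
Variable adj : V -> V -> Prop.
Hypothesis Hsym : forall x y, adj x y -> adj y x.
Hypothesis Hirr : forall x, ~ adj x x.
Hypothesis Hc : forall u v, clos_refl_trans V adj u v.
Hypothesis HL1 : forall C : lobe adj, arc_transitive (@lobe_adj V adj C).
Hypothesis HL2 : forall C D : lobe adj, graph_isomorphic (@lobe_adj V adj C) (@lobe_adj V adj D).
Hypothesis HL3 : forall u v : V, same_card (lobes_at adj u) (lobes_at adj v).
Variables x y x' y' : V.
Hypothesis Hxy : adj x y.
Hypothesis Hxy' : adj x' y'.

Notation inl := (@inl V adj).
Notation lobe := (lobe adj).

Definition C0 : lobe := lobe_of Hxy.
Definition C0' : lobe := lobe_of Hxy'.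
Lemma HC0 : inl C0 x. Proof. exists y. apply lobe_of_LP. Qed.
Lemma HC0' : inl C0' x'. Proof. exists y'. apply lobe_of_LP. Qed.
Lemma HC0y : inl C0 y. Proof. exists x. apply LP_sym; auto. apply lobe_of_LP. Qed.

Definition E1 := entry Hsym Hirr Hc x.
Definition E2 := entry Hsym Hirr Hc x'.
Definition H1 := H Hirr Hc x C0.
Definition H2 := H Hirr Hc x' C0'.
Definition d1 := dd Hc x.

Lemma E1_spec D : inl D (E1 D). Proof. apply (entry_spec Hsym Hirr Hc x D). Qed.
Lemma E2_spec D : inl D (E2 D). Proof. apply (entry_spec Hsym Hirr Hc x' D). Qed.
Lemma H1_inl w : inl (H1 w) w. Proof. apply (H_inl Hirr Hc HC0). Qed.
Lemma H2_inl w : inl (H2 w) w. Proof. apply (H_inl Hirr Hc HC0'). Qed.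
Lemma H1_x : H1 x = C0. Proof. apply H_r. Qed.
Lemma H2_x : H2 x' = C0'. Proof. apply H_r. Qed.
Lemma E1_C0 : E1 C0 = x. Proof. apply (entry_C0 Hsym Hirr Hc HC0). Qed.
Lemma E2_C0 : E2 C0' = x'. Proof. apply (entry_C0 Hsym Hirr Hc HC0'). Qed.
Lemma H1_ne w : w <> x -> E1 (H1 w) <> w. Proof. apply H_entry_ne. Qed.
Lemma H2_ne w : w <> x' -> E2 (H2 w) <> w. Proof. apply H_entry_ne. Qed.
Lemma d1_lt w : w <> x -> d1 (E1 (H1 w)) < d1 w. Proof. apply (H_entry_dd Hsym Hirr Hc HC0). Qed.
Lemma d2_lt w : w <> x' -> dd Hc x' (E2 (H2 w)) < dd Hc x' w. Proof. apply (H_entry_dd Hsym Hirr Hc HC0'). Qed.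
Lemma nonentry1 D w : inl D w -> w <> E1 D -> w <> x /\ H1 w = D. Proof. apply nonentry_H. Qed.
Lemma nonentry2 D w : inl D w -> w <> E2 D -> w <> x' /\ H2 w = D. Proof. apply nonentry_H. Qed.
Lemma other1 D w : inl D w -> D <> H1 w -> E1 D = w. Proof. apply entry_other. Qed.
Lemma other2 D w : inl D w -> D <> H2 w -> E2 D = w. Proof. apply entry_other. Qed.

Lemma PSI_ex (D : lobe) v (D' : lobe) v' :
  exists psi : V -> V, inl D v -> inl D' v' -> psi_spec D D' psi /\ psi v = v'.
Proof.
  destruct (classic (inl D v /\ inl D' v')) as [[(b & Hb) (b' & Hb')]|Hno].
  - destruct (psi_ex Hsym Hb Hb' (@HL2 D D') (@HL1 D')) as (psi & Hp & E & _). exists psi; auto.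
  - exists (fun z => z). intros; exfalso; auto.
Qed.
Definition PSI D v D' v' := proj1_sig (constructive_indefinite_description _ (PSI_ex D v D' v')).
Lemma PSI_spec D v D' v' : inl D v -> inl D' v' -> psi_spec D D' (PSI D v D' v') /\ PSI D v D' v' v = v'.
Proof. unfold PSI. destruct (constructive_indefinite_description _ _). simpl. auto. Qed.

Lemma PSI0_ex : exists psi : V -> V, psi_spec C0 C0' psi /\ psi x = x' /\ psi y = y'.
Proof. apply (psi_ex Hsym (lobe_of_LP Hxy) (lobe_of_LP Hxy') (@HL2 _ _) (@HL1 _)). Qed.
Definition PSI0 := proj1_sig (constructive_indefinite_description _ PSI0_ex).
Lemma PSI0_spec : psi_spec C0 C0' PSI0 /\ PSI0 x = x' /\ PSI0 y = y'.
Proof. unfold PSI0. destruct (constructive_indefinite_description _ _). simpl. auto. Qed.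

Lemma SIG_ex v (P : lobe) v' (P' : lobe) :
  exists s, inl P v -> inl P' v' -> sigma_spec v P v' P' s.
Proof.
  destruct (classic (inl P v /\ inl P' v')) as [[Hp Hp']|Hno].
  - destruct (sigma_ex Hp Hp' (@HL3 v v')) as [s Hs]. exists s; auto.
  - exists (fun z => z). intros; exfalso; auto.
Qed.
Definition SIG v P v' P' := proj1_sig (constructive_indefinite_description _ (SIG_ex v P v' P')).
Lemma SIG_spec v P v' P' : inl P v -> inl P' v' -> sigma_spec v P v' P' (SIG v P v' P').
Proof. unfold SIG. destruct (constructive_indefinite_description _ _). simpl. auto. Qed.

Definition Limg_of (v : V) (p : V * lobe) (D : lobe) : lobe :=
  if excluded_middle_informative (D = H1 v) then snd p else SIG v (H1 v) (fst p) (snd p) D.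
Definition Lpsi_of (v : V) (p : V * lobe) (D : lobe) : V -> V :=
  if excluded_middle_informative (D = C0) then PSI0 else PSI D v (Limg_of v p D) (fst p).

Fixpoint FF (k : nat) (w : V) : V * lobe :=
  match k with
  | 0 => (x', C0')
  | S k' => if excluded_middle_informative (w = x) then (x', C0') else
      let D := H1 w in let v := E1 D in let p := FF k' v in (Lpsi_of v p D w, Limg_of v p D)
  end.

Lemma FF_stable k1 : forall k2 w, d1 w < k1 -> d1 w < k2 -> FF k1 w = FF k2 w.
Proof.
  induction k1 as [|j1 IH]; intros k2 w H1' H2'; [lia|]. destruct k2 as [|j2]; [lia|].
  simpl. destruct (excluded_middle_informative (w = x)) as [E|E]; auto.
  pose proof (d1_lt E) as Hlt. rewrite (IH j2 (E1 (H1 w))) by lia. reflexivity.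
Qed.

Definition fdata (w : V) := FF (S (d1 w)) w.
Definition f (w : V) := fst (fdata w).
Definition Hm (w : V) := snd (fdata w).
Definition Limg (D : lobe) := Limg_of (E1 D) (fdata (E1 D)) D.
Definition Lpsi (D : lobe) := Lpsi_of (E1 D) (fdata (E1 D)) D.

Lemma fdata_x : fdata x = (x', C0').
Proof. unfold fdata. simpl. destruct (excluded_middle_informative (x = x)); congruence. Qed.

Lemma fdata_eq w : w <> x -> fdata w = (Lpsi (H1 w) w, Limg (H1 w)).
Proof.
  intros Hw. unfold fdata. simpl. destruct (excluded_middle_informative (w = x)); [congruence|].
  pose proof (d1_lt Hw) as Hlt.
  rewrite (@FF_stable (d1 w) (S (d1 (E1 (H1 w)))) (E1 (H1 w))) by lia. reflexivity.
Qed.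

Lemma f_x : f x = x'. Proof. unfold f. rewrite fdata_x. auto. Qed.
Lemma Hm_x : Hm x = C0'. Proof. unfold Hm. rewrite fdata_x. auto. Qed.
Lemma f_eq w : w <> x -> f w = Lpsi (H1 w) w. Proof. intros. unfold f. rewrite fdata_eq; auto. Qed.
Lemma Hm_eq w : w <> x -> Hm w = Limg (H1 w). Proof. intros. unfold Hm. rewrite fdata_eq; auto. Qed.

Definition Pv (w : V) := Hm w = H2 (f w) /\ (w = x <-> f w = x').

Definition Lok_concl (D : lobe) :=
  let v := E1 D in
  psi_spec D (Limg D) (Lpsi D) /\ Lpsi D v = f v /\ inl (Limg D) (f v) /\ E2 (Limg D) = f v /\
  ((v = x /\ D = C0 /\ Limg D = C0' /\ Lpsi D = PSI0) \/
   (D <> H1 v /\ Limg D = SIG v (H1 v) (f v) (H2 (f v)) D /\ Limg D <> H2 (f v))).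

Lemma Lok D : Pv (E1 D) -> Lok_concl D.
Proof.
  intros [HPv1 HPv2]. unfold Lok_concl. set (v := E1 D) in *.
  assert (HvD : inl D v) by apply E1_spec.
  destruct (excluded_middle_informative (D = H1 v)) as [ED|ND].
  - assert (Hvx : v = x).
    { apply NNPP. intro K. apply (H1_ne K). fold v. rewrite <- ED. reflexivity. }
    assert (HD0 : D = C0) by (rewrite ED, Hvx; apply H1_x).
    assert (HLi : Limg D = C0').
    { unfold Limg. fold v. unfold Limg_of. destruct (excluded_middle_informative (D = H1 v)); [|contradiction].
      rewrite Hvx, fdata_x. reflexivity. }
    assert (HLp : Lpsi D = PSI0).
    { unfold Lpsi, Lpsi_of. destruct (excluded_middle_informative (D = C0)); [auto|contradiction]. }
    assert (Hfv : f v = x') by (rewrite Hvx; apply f_x).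
    rewrite HLi, HLp, Hfv. destruct PSI0_spec as (S1 & S2 & _).
    split. rewrite HD0; auto. split. rewrite Hvx; auto. split. apply HC0'. split. apply E2_C0.
    left. auto.
  - assert (HLi : Limg D = SIG v (H1 v) (f v) (H2 (f v)) D).
    { unfold Limg. fold v. unfold Limg_of. destruct (excluded_middle_informative (D = H1 v)); [contradiction|].
      change (snd (fdata v)) with (Hm v). rewrite HPv1. reflexivity. }
    pose proof (SIG_spec (H1_inl v) (H2_inl (f v))) as (S1 & S2 & S3).
    destruct (S1 D HvD ND) as [K1 K2]. rewrite <- HLi in K1, K2.
    assert (HD0 : D <> C0).
    { intro E. apply ND. assert (Hvx0 : v = x) by (unfold v; rewrite E; apply E1_C0). rewrite E, Hvx0. symmetry. apply H1_x. }
    assert (HLp : Lpsi D = PSI D v (Limg D) (f v)).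
    { unfold Lpsi, Lpsi_of. destruct (excluded_middle_informative (D = C0)); [contradiction|]. fold v. reflexivity. }
    destruct (PSI_spec HvD K1) as [P1 P2]. rewrite <- HLp in P1, P2.
    split; auto. split; auto. split; auto. split. apply other2; auto. right; auto.
Qed.

Lemma P_all : forall w, Pv w.
Proof.
  intros w. remember (d1 w) as n. revert w Heqn.
  induction n as [n IH] using (well_founded_induction lt_wf). intros w En.
  destruct (classic (w = x)) as [->|Hw].
  - split. rewrite Hm_x, f_x, H2_x; auto. rewrite f_x. tauto.
  - set (D := H1 w). set (v := E1 D).
    assert (Pvv : Pv v) by (apply (IH (d1 v)); [subst; apply d1_lt; auto|reflexivity]).
    destruct (Lok Pvv) as (Sp & Ev & Iv & Env & _). fold v in Ev, Iv, Env.
    destruct Sp as (Sp1 & Sp2 & Sp3 & Sp4).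
    assert (HwD : inl D w) by apply H1_inl.
    assert (Hvw : v <> w) by (apply H1_ne; auto).
    assert (Hne : f w <> f v).
    { rewrite (f_eq Hw). fold D. rewrite <- Ev. intro K. apply Hvw. symmetry. apply (Sp2 w v); auto. apply E1_spec. }
    assert (Hin : inl (Limg D) (f w)) by (rewrite (f_eq Hw); apply Sp1; auto).
    destruct (nonentry2 Hin) as [K1 K2]. rewrite Env; auto.
    split. rewrite (Hm_eq Hw). fold D. auto. split; intro; contradiction.
Qed.

Lemma Lok_all D : Lok_concl D.
Proof. apply Lok, P_all. Qed.

Lemma f_agree D u : inl D u -> f u = Lpsi D u.
Proof.
  intros Hu. destruct (classic (u = E1 D)) as [->|Hne].
  - destruct (Lok_all D) as (_ & Ev & _). auto.
  - destruct (nonentry1 Hu Hne) as [Hux HH]. rewrite (f_eq Hux). rewrite HH. reflexivity.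
Qed.

Lemma f_x_iff w : w = x <-> f w = x'.
Proof. apply P_all. Qed.

Lemma Hm_H2 w : Hm w = H2 (f w).
Proof. apply P_all. Qed.

Lemma Limg_H1 w : Hm w = Limg (H1 w).
Proof.
  destruct (classic (w = x)) as [->|Hw].
  - rewrite Hm_x. rewrite H1_x. destruct (Lok_all C0) as (_ & _ & _ & _ & [(_ & _ & K & _)|(K & _)]); auto.
    exfalso. apply K. rewrite E1_C0, H1_x. auto.
  - apply Hm_eq; auto.
Qed.

Lemma f_inj : forall u w, f u = f w -> u = w.
Proof.
  intros u. remember (d1 u) as n. revert u Heqn.
  induction n as [n IH] using (well_founded_induction lt_wf). intros u En w E.
  destruct (classic (u = x)) as [->|Hu].
  - rewrite f_x in E. symmetry. apply f_x_iff. auto.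
  - destruct (classic (w = x)) as [->|Hw].
    + rewrite f_x in E. apply f_x_iff. auto.
    + set (D1 := H1 u). set (D2 := H1 w).
      assert (EL : Limg D1 = Limg D2).
      { unfold D1, D2. rewrite <- !Limg_H1. rewrite !Hm_H2. rewrite E. auto. }
      destruct (Lok_all D1) as (Sp1 & Ev1 & Iv1 & Env1 & Case1).
      destruct (Lok_all D2) as (Sp2 & Ev2 & Iv2 & Env2 & Case2).
      assert (Ev : E1 D1 = E1 D2).
      { apply (IH (d1 (E1 D1))). subst. apply d1_lt; auto. reflexivity. rewrite <- Env1, <- Env2, EL. auto. }
      assert (ED : D1 = D2).
      { destruct Case1 as [(A1 & A2 & A3 & _)|(B1 & B2 & B3)];
        destruct Case2 as [(A1' & A2' & A3' & _)|(B1' & B2' & B3')].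
        - congruence.
        - exfalso. apply B3'. rewrite <- EL, A3. rewrite <- Ev, A1, f_x, H2_x. auto.
        - exfalso. apply B3. rewrite EL, A3'. rewrite Ev, A1', f_x, H2_x. auto.
        - pose proof (SIG_spec (H1_inl (E1 D1)) (H2_inl (f (E1 D1)))) as (_ & S2 & _).
          apply S2; auto. apply E1_spec. rewrite Ev. apply E1_spec. rewrite Ev; auto.
          rewrite <- B2. rewrite EL, B2'. rewrite Ev. auto. }
      rewrite (f_eq Hu), (f_eq Hw) in E. fold D1 D2 in E. rewrite <- ED in E.
      destruct Sp1 as (_ & Inj & _). apply Inj; auto. apply H1_inl. rewrite ED. apply H1_inl.
Qed.

Lemma pre_lobe (D' : lobe) v : f v = E2 D' -> exists D, E1 D = v /\ Limg D = D'.
Proof.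
  intros Hv. destruct (classic (D' = H2 (f v))) as [ED|ND].
  - assert (Hfv : f v = x').
    { apply NNPP. intro K. apply (H2_ne K). rewrite <- ED. auto. }
    assert (Hvx : v = x) by (apply f_x_iff; auto).
    exists C0. split. rewrite E1_C0; auto.
    destruct (Lok_all C0) as (_ & _ & _ & _ & [(_ & _ & K & _)|(K & _)]).
    + rewrite K, ED, Hfv, H2_x. auto.
    + exfalso. apply K. rewrite E1_C0, H1_x. auto.
  - pose proof (SIG_spec (H1_inl v) (H2_inl (f v))) as (_ & _ & S3).
    assert (Hin : inl D' (f v)) by (rewrite Hv; apply E2_spec).
    destruct (S3 D' Hin ND) as (D & HD & ND' & ES).
    assert (EE1 : E1 D = v) by (apply other1; auto).
    exists D. split; auto.
    destruct (Lok_all D) as (_ & _ & _ & _ & [(K1 & K2 & _)|(_ & K & _)]).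
    + exfalso. apply ND'. rewrite EE1 in K1. rewrite K1, K2, H1_x. reflexivity.
    + rewrite K, EE1. auto.
Qed.

Lemma f_surj : forall z, exists w, f w = z.
Proof.
  intros z. remember (dd Hc x' z) as n. revert z Heqn.
  induction n as [n IH] using (well_founded_induction lt_wf). intros z En.
  destruct (classic (z = x')) as [->|Hz].
  - exists x. apply f_x.
  - set (D' := H2 z). set (v' := E2 D').
    destruct (IH (dd Hc x' v')) with (z := v') as [v Hv]. subst. apply d2_lt; auto. reflexivity.
    destruct (pre_lobe (D' := D') (v := v)) as (D & ED & LD). rewrite Hv; auto.
    destruct (Lok_all D) as ((_ & _ & Su & _) & _).
    destruct (Su z) as (a & Ha & Ea). rewrite LD. apply H2_inl.
    exists a. rewrite (f_agree Ha). auto.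
Qed.

Lemma f_adj u w : adj u w <-> adj (f u) (f w).
Proof.
  split.
  - intros Huw. set (E := lobe_of Huw).
    assert (HE : LP E (u, w)) by apply lobe_of_LP.
    destruct (inl_LP Hsym HE) as [Iu Iw].
    rewrite (f_agree Iu), (f_agree Iw).
    destruct (Lok_all E) as ((_ & _ & _ & S4) & _).
    apply (LP_adj (C := Limg E)). apply S4; auto.
  - intros Huw. set (E' := lobe_of Huw).
    assert (HE : LP E' (f u, f w)) by apply lobe_of_LP.
    destruct (inl_LP Hsym HE) as [Iu Iw].
    destruct (f_surj (E2 E')) as [v Hv].
    destruct (pre_lobe Hv) as (D & ED & LD).
    destruct (Lok_all D) as ((S1 & S2 & S3 & S4) & _).
    rewrite <- LD in Iu, Iw, HE.
    destruct (S3 _ Iu) as (u1 & Hu1 & Eu1).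
    destruct (S3 _ Iw) as (w1 & Hw1 & Ew1).
    assert (u1 = u). { apply f_inj. rewrite (f_agree Hu1). auto. }
    assert (w1 = w). { apply f_inj. rewrite (f_agree Hw1). auto. }
    subst u1 w1. rewrite <- Eu1, <- Ew1 in HE. apply (LP_adj (C := D)). apply S4; auto.
Qed.

Lemma f_y : f y = y'.
Proof.
  rewrite (f_agree HC0y). destruct (Lok_all C0) as (_ & _ & _ & _ & [(_ & _ & _ & K)|(K & _)]).
  - rewrite K. apply PSI0_spec.
  - exfalso. apply K. rewrite E1_C0, H1_x. auto.
Qed.

Lemma backward_auto : exists g, is_automorphism adj g /\ g x = x' /\ g y = y'.
Proof.
  exists f. split; [split|split].
  - exists (fun z => proj1_sig (constructive_indefinite_description _ (f_surj z))).
    split.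
    + intros a. destruct (constructive_indefinite_description _ _) as [w Hw]. simpl. apply f_inj; auto.
    + intros b. destruct (constructive_indefinite_description _ _) as [w Hw]. simpl. auto.
  - apply f_adj.
  - apply f_x.
  - apply f_y.
Qed.

End Back.

Set Implicit Arguments.
Unset Strict Implicit.

Unset Implicit Arguments.
Set Strict Implicit.

Theorem theorem5p1 (V : Type) (adj : V -> V -> Prop)
  (Hsimple : simple_graph adj) (Hcount : countable_vertices V)
  (Hconn : connectivity_one adj) :
  arc_transitive adj <->
  ((forall C : lobe adj, arc_transitive (@lobe_adj V adj C)) /\
   (forall C D : lobe adj, graph_isomorphic (@lobe_adj V adj C) (@lobe_adj V adj D)) /\
   (forall u v : V, same_card (lobes_at adj u) (lobes_at adj v))).
Proof.
  destruct Hsimple as [Hsym Hirr].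
  split.
  - intros Hat. apply forward; auto.
  - intros (HL1 & HL2 & HL3) x y x' y' Hxy Hxy'.
    assert (Hc : forall u v, Relation_Operators.clos_refl_trans V adj u v).
    { destruct Hconn as ((_ & Hc) & _). exact Hc. }
    exact (backward_auto Hsym Hirr Hc HL1 HL2 HL3 Hxy Hxy').
Qed.
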